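(* Let the sequences be generated by SONATA in the setting below, under the additional assumptions (A1) $\|\nabla F(\mathbf{x})\|\le L_F<\infty$ for all $\mathbf{x}\in X$, (A2) every subgradient $\boldsymbol\xi\in\partial G(\mathbf{x})$ satisfies $\|\boldsymbol\xi\|\le L_G<\infty$ for all $\mathbf{x}\in X$, and (A3) $\gamma^k\in(0,1]$ with $\sum_k\gamma^k=\infty$, $\sum_k(\gamma^k)^2<\infty$. Then for all $i=1,\dots,I$: (a) $\phi_{lb}\mathbf{1}\le\boldsymbol\phi^k\le\phi_{ub}\mathbf{1}$ for all $k$, with $\phi_{lb}\ge\kappa^{2(I-1)B}>0$ and $\phi_{ub}\le I-\kappa^{2(I-1)B}$; (b) $\sup_k\|\mathbf{y}_{(i)}^k-\bar{\mathbf{y}}_\phi^k\|<\infty$; (c) $\sup_k\|\mathbf{x}_{(i)}^k-\widetilde{\mathbf{x}}_i^k\|<\infty$.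
   Context: Problem: minimize $V(\mathbf{x})\triangleq F(\mathbf{x})+G(\mathbf{x})$, $F=\sum_{i=1}^If_i$, over $\mathbf{x}\in X$, where $X\subseteq\mathbb{R}^m$ is nonempty closed convex; each $f_i:O\to\mathbb{R}$ is $C^1$ on an open set $O\supseteq X$ with $\nabla f_i$ $L_i$-Lipschitz on $X$; $G:O\to\mathbb{R}$ is convex; $V$ is bounded below on $X$. Network: digraphs $G^k=(\{1,\dots,I\},E^k)$, $(j,i)\in E^k$ meaning $j$ can send to $i$, $B$-strongly connected ($\bigcup_{t=k}^{k+B-1}E^t$ strongly connected for every $k$). $\mathbf{A}^k=(a_{ij}^k)$: $a_{ij}^k=0$ if $j\ne i$ and $(j,i)\notin E^k$, $a_{ij}^k\ge\kappa$ if $(j,i)\in E^k$, $a_{ii}^k\ge\kappa$ ($\kappa>0$), nonnegative with $\mathbf{1}^T\mathbf{A}^k=\mathbf{1}^T$. Assumption III.14 on $\widetilde f_i:O\times O\to\mathbb{R}$: $\widetilde f_i(\cdot|\mathbf{x})$ is $\tau_i$-strongly convex on $X$ for all $\mathbf{x}\in X$; $C^1$ on $O$ with $\nabla\widetilde f_i(\mathbf{x}|\mathbf{x})=\nabla f_i(\mathbf{x})$; $\nabla\widetilde f_i(\mathbf{x}|\cdot)$ is $\widetilde L_i$-Lipschitz on $X$. SONATA: initialize $\mathbf{x}_{(i)}^0\in X$, $\phi_{(i)}^0=1$, $\mathbf{y}_{(i)}^0=\nabla f_i(\mathbf{x}_{(i)}^0)$; at iteration $k$, $\widetilde{\mathbf{x}}_i^k=\operatorname{argmin}_{\mathbf{x}\in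 X}\{\widetilde f_i(\mathbf{x}|\mathbf{x}_{(i)}^k)+(I\mathbf{y}_{(i)}^k-\nabla f_i(\mathbf{x}_{(i)}^k))^T(\mathbf{x}-\mathbf{x}_{(i)}^k)+G(\mathbf{x})\}$, $\mathbf{x}_{(i)}^{k+1/2}=\mathbf{x}_{(i)}^k+\gamma^k(\widetilde{\mathbf{x}}_i^k-\mathbf{x}_{(i)}^k)$, $\phi_{(i)}^{k+1}=\sum_ja_{ij}^k\phi_{(j)}^k$, $\mathbf{x}_{(i)}^{k+1}=\frac{1}{\phi_{(i)}^{k+1}}\sum_ja_{ij}^k\phi_{(j)}^k\mathbf{x}_{(j)}^{k+1/2}$, $\mathbf{y}_{(i)}^{k+1}=\frac{1}{\phi_{(i)}^{k+1}}\sum_ja_{ij}^k\phi_{(j)}^k\mathbf{y}_{(j)}^k+\frac{1}{\phi_{(i)}^{k+1}}(\nabla f_i(\mathbf{x}_{(i)}^{k+1})-\nabla f_i(\mathbf{x}_{(i)}^k))$. $\boldsymbol\phi^k=(\phi_{(i)}^k)_i$, $\phi_{lb}=\inf_k\min_i\phi_{(i)}^k$, $\phi_{ub}=\sup_k\max_i\phi_{(i)}^k$, $\bar{\mathbf{y}}_\phi^k\triangleq\frac1I\sum_j\phi_{(j)}^k\mathbf{y}_{(j)}^k$. *)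

(* Defs.v *)
From Stdlib Require Import Reals Relations.
From mathcomp Require Import all_boot.
Set Implicit Arguments.
Unset Strict Implicit.
Unset Printing Implicit Defensive.
Open Scope R_scope.

Definition vec (m : nat) := 'I_m -> R.

Definition rsum (n : nat) (f : 'I_n -> R) : R := \big[Rplus/0]_(i < n) f i.

Definition vadd m (x y : vec m) : vec m := fun j => x j + y j.
Definition vsub m (x y : vec m) : vec m := fun j => x j - y j.
Definition vscal m (a : R) (x : vec m) : vec m := fun j => a * x j.
Definition vsum m n (f : 'I_n -> vec m) : vec m := fun j => rsum (fun i => f i j).
Definition dot m (x y : vec m) : R := rsum (fun j => x j * y j).
Definition vnorm m (x : vec m) : R := sqrt (dot x x).
Definition vcomb m (t : R) (x y : vec m) : vec m := vadd (vscal (1 - t) x) (vscal t y).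

Definition is_open m (O : vec m -> Prop) : Prop :=
  forall x, O x -> exists r, 0 < r /\ forall y, vnorm (vsub y x) < r -> O y.

Definition is_closed m (X : vec m -> Prop) : Prop :=
  forall (u : nat -> vec m) (l : vec m), (forall n, X (u n)) ->
    (forall eps, 0 < eps -> exists N, forall n, (N <= n)%nat -> vnorm (vsub (u n) l) < eps) ->
    X l.

Definition is_convex_set m (X : vec m -> Prop) : Prop :=
  forall x y t, X x -> X y -> 0 <= t <= 1 -> X (vcomb t x y).

Definition has_gradient_on m (O : vec m -> Prop) (f : vec m -> R) (g : vec m -> vec m) : Prop :=
  forall x, O x -> forall eps, 0 < eps -> exists delta, 0 < delta /\
    forall y, O y -> vnorm (vsub y x) < delta ->
      Rabs (f y - f x - dot (g x) (vsub y x)) <= eps * vnorm (vsub y x).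

Definition continuous_on m n (O : vec m -> Prop) (g : vec m -> vec n) : Prop :=
  forall x, O x -> forall eps, 0 < eps -> exists delta, 0 < delta /\
    forall y, O y -> vnorm (vsub y x) < delta -> vnorm (vsub (g y) (g x)) < eps.

Definition C1_on m (O : vec m -> Prop) (f : vec m -> R) (g : vec m -> vec m) : Prop :=
  has_gradient_on O f g /\ continuous_on O g.

Definition lipschitz_on m n (X : vec m -> Prop) (g : vec m -> vec n) (L : R) : Prop :=
  forall x y, X x -> X y -> vnorm (vsub (g x) (g y)) <= L * vnorm (vsub x y).

Definition convex_fun_on m (O : vec m -> Prop) (G : vec m -> R) : Prop :=
  forall x y t, O x -> O y -> 0 <= t <= 1 -> O (vcomb t x y) ->
    G (vcomb t x y) <= (1 - t) * G x + t * G y.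

Definition strongly_convex_on m (X : vec m -> Prop) (h : vec m -> R) (tau : R) : Prop :=
  0 < tau /\
  forall x y t, X x -> X y -> 0 <= t <= 1 ->
    h (vcomb t x y) <= (1 - t) * h x + t * h y
                       - tau / 2 * t * (1 - t) * (vnorm (vsub x y)) ^ 2.

Definition subgradient m (O : vec m -> Prop) (G : vec m -> R) (x xi : vec m) : Prop :=
  forall y, O y -> G y >= G x + dot xi (vsub y x).

(* E k j i : at time k, (j,i) is an edge, i.e. j can send to i *)
Definition strongly_connected n (Rel : 'I_n -> 'I_n -> Prop) : Prop :=
  forall i j, i <> j -> clos_trans _ Rel i j.

Definition B_strongly_connected n (E : nat -> 'I_n -> 'I_n -> Prop) (B : nat) : Prop :=
  forall k, strongly_connected (fun j i => exists t, (k <= t)%nat /\ (t < k + B)%nat /\ E t j i).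

(* a k i j = a_{ij}^k *)
Definition admissible_weights n (E : nat -> 'I_n -> 'I_n -> Prop)
    (a : nat -> 'I_n -> 'I_n -> R) (kappa : R) : Prop :=
  forall k,
    (forall i j, 0 <= a k i j) /\
    (forall i j, j <> i -> ~ E k j i -> a k i j = 0) /\
    (forall i j, E k j i -> kappa <= a k i j) /\
    (forall i, kappa <= a k i i) /\
    (forall j, rsum (fun i => a k i j) = 1).

Definition sonata_obj m nI (ft : 'I_nI -> vec m -> vec m -> R) (gf : 'I_nI -> vec m -> vec m)
    (G : vec m -> R) (i : 'I_nI) (xk yk : vec m) (z : vec m) : R :=
  ft i z xk + dot (vsub (vscal (INR nI) yk) (gf i xk)) (vsub z xk) + G z.

(* Main.v *)
Require Import Defs.
From HB Require Import structures.
From Stdlib Require Import Reals Relations Lra Lia FunctionalExtensionality Classical.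
From mathcomp Require Import all_boot zify.
Set Warnings "-notation-overridden -redundant-canonical-projection -deprecated".
Open Scope R_scope.
Set Implicit Arguments.
Unset Strict Implicit.

HB.instance Definition _ := Monoid.isComLaw.Build R 0 Rplus (fun a b c => esym (Rplus_assoc a b c)) Rplus_comm Rplus_0_l.

Lemma rsum_ext n (f g : 'I_n -> R) : (forall i, f i = g i) -> rsum f = rsum g.
Proof. move=> H; rewrite /rsum; apply: eq_bigr => i _; exact: H. Qed.

Lemma rsum_add n (f g : 'I_n -> R) : rsum (fun i => f i + g i) = rsum f + rsum g.
Proof. by rewrite /rsum big_split. Qed.

Lemma rsum_scal n c (f : 'I_n -> R) : rsum (fun i => c * f i) = c * rsum f.
Proof.
rewrite /rsum; apply: (big_rec2 (fun u v => u = c * v)); first by ring.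
by move=> i u v _ ->; ring.
Qed.

Lemma rsum_opp n (f : 'I_n -> R) : rsum (fun i => - f i) = - rsum f.
Proof.
rewrite /rsum; apply: (big_rec2 (fun u v => u = - v)); first by ring.
by move=> i u v _ ->; ring.
Qed.

Lemma rsum_sub n (f g : 'I_n -> R) : rsum (fun i => f i - g i) = rsum f - rsum g.
Proof. rewrite /Rminus -rsum_opp -rsum_add; done. Qed.

Lemma rsum_le n (f g : 'I_n -> R) : (forall i, f i <= g i) -> rsum f <= rsum g.
Proof.
move=> H; rewrite /rsum; apply: (big_rec2 (fun u v => u <= v)); first lra.
move=> i u v _ Huv; have := H i; lra.
Qed.

Lemma rsum_ge0 n (f : 'I_n -> R) : (forall i, 0 <= f i) -> 0 <= rsum f.
Proof.
move=> H; have -> : 0 = rsum (fun _ : 'I_n => 0).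
  rewrite /rsum; apply: (big_rec (fun u => 0 = u)) => //; move=> i u _ <-; ring.
by apply: rsum_le.
Qed.

Lemma rsum0 n : rsum (fun _ : 'I_n => 0) = 0.
Proof. rewrite /rsum; apply: (big_rec (fun u => u = 0)) => //; move=> i u _ ->; ring. Qed.

Lemma rsum_abs n (f : 'I_n -> R) : Rabs (rsum f) <= rsum (fun i => Rabs (f i)).
Proof.
rewrite /rsum; apply: (big_rec2 (fun u v => Rabs u <= v)); first by rewrite Rabs_R0; lra.
move=> i u v _ H; have := Rabs_triang (f i) u; lra.
Qed.

Lemma rsum_const n c : rsum (fun _ : 'I_n => c) = INR n * c.
Proof.
rewrite /rsum; elim: n => [|n IH]; first by rewrite big_ord0 /=; ring.
rewrite big_ord_recr /= IH; change (INR n * c + c = INR (S n) * c); rewrite S_INR; ring.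
Qed.

Lemma rsum_D1 n (f : 'I_n -> R) i : rsum f = f i + rsum (fun j => if j != i then f j else 0).
Proof. rewrite /rsum (bigD1 i) //=. congr (_ + _). by rewrite big_mkcond. Qed.

Lemma rsum_term_le n (f : 'I_n -> R) i : (forall j, 0 <= f j) -> f i <= rsum f.
Proof.
move=> H; rewrite (rsum_D1 f i).
have : 0 <= rsum (fun j => if j != i then f j else 0).
  by apply: rsum_ge0 => j; case: (j != i) => //; lra.
lra.
Qed.

Lemma rsum_delta n (g : 'I_n -> R) i : rsum (fun j => (if j == i then 1 else 0) * g j) = g i.
Proof.
rewrite (rsum_D1 _ i) eqxx.
rewrite (rsum_ext (g := fun _ => 0)) ?rsum0; first ring.
move=> j; case: (j =P i) => [->|/eqP H]; rewrite ?eqxx //=; ring.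
Qed.

Lemma rsum_exch n p (f : 'I_n -> 'I_p -> R) :
  rsum (fun i => rsum (fun j => f i j)) = rsum (fun j => rsum (fun i => f i j)).
Proof. rewrite /rsum. exact: exchange_big. Qed.

Definition bmax n (F : 'I_n -> R) := \big[Rmax/0]_(i < n) F i.

Lemma bmax_ge0 n (F : 'I_n -> R) : 0 <= bmax F.
Proof.
rewrite /bmax; apply: (big_rec (fun u => 0 <= u)); first lra.
move=> i u _ H; have := Rmax_r (F i) u; lra.
Qed.

Lemma bmax_le n (F : 'I_n -> R) c : 0 <= c -> (forall i, F i <= c) -> bmax F <= c.
Proof.
move=> c0 H; rewrite /bmax; apply: (big_rec (fun u => u <= c)) => //.
move=> i u _ Hu; apply: Rmax_lub => //.
Qed.

Lemma bmax_ge n (F : 'I_n -> R) i : F i <= bmax F.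
Proof.
rewrite /bmax unlock.
have : i \in index_enum 'I_n by rewrite mem_index_enum.
elim: (index_enum 'I_n) => [|j s IH] //=.
rewrite in_cons => /orP [/eqP <-|Hi]; first exact: Rmax_l.
apply: Rle_trans (IH Hi) _; exact: Rmax_r.
Qed.

Lemma le_div_r a b c : 0 < b -> a * b <= c -> a <= c / b.
Proof. move=> Hb H; have -> : a = (a * b) / b by field; lra.
apply: Rmult_le_compat_r => //; left; apply: Rinv_0_lt_compat => //. Qed.

Lemma div_le_r a b c : 0 < b -> a <= c * b -> a / b <= c.
Proof. move=> Hb H; have -> : c = (c * b) / b by field; lra.
apply: Rmult_le_compat_r => //; left; apply: Rinv_0_lt_compat => //. Qed.

Lemma abs_le_inv x a : Rabs x <= a -> - a <= x <= a.
Proof. move=> H; have := Rle_abs x; have := Rle_abs (- x); rewrite Rabs_Ropp; lra. Qed.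

Lemma abs_le_intro x a : - a <= x <= a -> Rabs x <= a.
Proof. move=> H; unfold Rabs; case: (Rcase_abs x) => _; lra. Qed.


Lemma dot_ge0 m (v : vec m) : 0 <= dot v v.
Proof. apply: rsum_ge0 => j; nra. Qed.

Lemma vnorm_ge0 m (v : vec m) : 0 <= vnorm v.
Proof. exact: sqrt_pos. Qed.

Lemma coord_le m (v : vec m) j : Rabs (v j) <= vnorm v.
Proof.
rewrite /vnorm -(sqrt_Rsqr_abs (v j)); apply: sqrt_le_1_alt.
rewrite /Rsqr /dot; apply: (rsum_term_le (f := fun j => v j * v j)) => i; nra.
Qed.

Lemma sumsq_le n (f : 'I_n -> R) :
  rsum (fun j => f j * f j) <= rsum (fun j => Rabs (f j)) * rsum (fun j => Rabs (f j)).
Proof.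
elim: n f => [|n IH] f; first by rewrite /rsum !big_ord0; lra.
rewrite /rsum !big_ord_recr /=.
have := IH (fun i => f (widen_ord (leqnSn n) i)); rewrite /rsum.
set A := \big[Rplus/0]_(i < n) (f (widen_ord (leqnSn n) i) * f (widen_ord (leqnSn n) i)).
set S := \big[Rplus/0]_(i < n) Rabs (f (widen_ord (leqnSn n) i)).
have HS : 0 <= S by rewrite /S; have := @rsum_ge0 n (fun i => Rabs (f (widen_ord (leqnSn n) i))); rewrite /rsum; apply => i; apply: Rabs_pos.
have Ha := Rabs_pos (f ord_max).
have Hsq : f ord_max * f ord_max = Rabs (f ord_max) * Rabs (f ord_max).
  by rewrite -Rabs_mult Rabs_right //; nra.
nra.
Qed.

Lemma vnorm_le1 m (v : vec m) : vnorm v <= rsum (fun j => Rabs (v j)).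
Proof.
rewrite /vnorm; have H0 : 0 <= rsum (fun j => Rabs (v j)) by apply: rsum_ge0 => j; apply: Rabs_pos.
rewrite -(sqrt_square (rsum _)) //; apply: sqrt_le_1_alt; exact: sumsq_le.
Qed.

Lemma vnorm_scal m c (v : vec m) : vnorm (vscal c v) = Rabs c * vnorm v.
Proof.
rewrite /vnorm /dot /vscal.
rewrite (rsum_ext (g := fun j => (c * c) * (v j * v j))); last by move=> j; ring.
rewrite rsum_scal sqrt_mult; first by have := sqrt_Rsqr_abs c; rewrite /Rsqr => ->.
- nra.
- exact: dot_ge0.
Qed.

Lemma vnorm0_coord m (v : vec m) j : vnorm v = 0 -> v j = 0.
Proof. move=> H; have := coord_le v j; rewrite H => H1; have := Rabs_pos (v j).
move=> H2; have : Rabs (v j) = 0 by lra. by case: (Req_dec (v j) 0) => // Hn; have := Rabs_pos_lt _ Hn; lra. Qed.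

Lemma dot_bound m (u w : vec m) : Rabs (dot u w) <= INR m * (vnorm u * vnorm w).
Proof.
apply: Rle_trans (rsum_abs _) _.
rewrite -(rsum_const m).
apply: rsum_le => j; rewrite Rabs_mult; apply: Rmult_le_compat; try apply: Rabs_pos; exact: coord_le.
Qed.

Lemma vsub_sym m (a b : vec m) : vnorm (vsub a b) = vnorm (vsub b a).
Proof.
have -> : vsub a b = vscal (-1) (vsub b a) by apply: functional_extensionality => j; rewrite /vsub /vscal; ring.
rewrite vnorm_scal Rabs_Ropp Rabs_R1; ring.
Qed.

Lemma vnorm_le_sp m (v : vec m) S : (forall j, Rabs (v j) <= S) -> vnorm v <= INR m * S.
Proof. move=> H; apply: Rle_trans (vnorm_le1 v) _; rewrite -rsum_const; exact: rsum_le. Qed.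

Lemma dot_lin2 m (g u w : vec m) (s t : R) :
  dot g (fun j => s * u j + t * w j) = s * dot g u + t * dot g w.
Proof.
rewrite /dot -!rsum_scal -rsum_add; apply: rsum_ext => j; ring.
Qed.


Section Subgrad.
Variables (m : nat) (O : vec m -> Prop) (G : vec m -> R) (x : vec m) (rho : R).
Hypothesis HG : convex_fun_on O G.
Hypothesis Hrho : 0 < rho.
Hypothesis Hcube : forall v : vec m, (forall c, Rabs (v c) <= rho) -> O (fun c => x c + v c).

Definition cubek k (v : vec m) := (forall c, Rabs (v c) <= rho) /\ (forall c : 'I_m, (k <= c)%N -> v c = 0).

Lemma subgrad_ind k : (k <= m)%N -> exists xi : vec m, (forall c : 'I_m, (k <= c)%N -> xi c = 0) /\
  forall v, cubek k v -> G x + dot xi v <= G (fun c => x c + v c).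
Proof.
elim: k => [|k IH] Hk.
  exists (fun _ => 0); split => // v [_ Hv].
  have -> : (fun c => x c + v c) = x by apply: functional_extensionality => c; rewrite Hv //; ring.
  rewrite /dot (rsum_ext (g := fun _ => 0)) ?rsum0; [lra| move=> j; ring].
have [xi [Hxi0 Hxi]] := IH (ltnW Hk).
set ek := Ordinal Hk.
set e : vec m := fun c => if c == ek then 1 else 0.
set A := fun (v : vec m) (t : R) => G (fun c => x c + (v c + t * e c)) - G x - dot xi v.
have Hv0 : cubek k (fun _ => 0) by split => c //; rewrite Rabs_R0; lra.
have Hkey : forall v w s t, cubek k v -> cubek k w -> 0 < s <= rho -> 0 < t <= rho ->
    0 <= t * A w (- s) + s * A v t.
  move=> v w s t [Hv1 Hv2] [Hw1 Hw2] Hs Ht.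
  set lam := s / (s + t).
  have Hl : 0 < lam < 1 by rewrite /lam; split; [apply: Rdiv_lt_0_compat; lra|
     rewrite /Rdiv -(Rinv_r (s+t)); [apply: Rmult_lt_compat_r; [apply: Rinv_0_lt_compat|]|]; lra].
  set u : vec m := fun c => (1 - lam) * w c + lam * v c.
  have Hu : cubek k u.
    split => c; last by move=> Hc; rewrite /u Hv2 // Hw2 //; ring.
    rewrite /u; apply: abs_le_intro; have := abs_le_inv (Hv1 c); have := abs_le_inv (Hw1 c); nra.
  have HIH := Hxi u Hu.
  have Hinq : forall (z : vec m), (forall c, Rabs (z c) <= rho) -> O (fun c => x c + z c) by [].
  have Hcq : forall (z : vec m) (r : R), cubek k z -> Rabs r <= rho -> forall c, Rabs (z c + r * e c) <= rho.
    move=> z r [Hz1 Hz2] Hr c; rewrite /e; case: (c =P ek) => [->|_].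
      by rewrite Hz2 /= ?leqnn // Rplus_0_l Rmult_1_r.
    by rewrite Rmult_0_r Rplus_0_r.
  have Oq := Hcube (Hcq w (- s) (conj Hw1 Hw2) ltac:(rewrite Rabs_Ropp Rabs_right; lra)).
  have Op := Hcube (Hcq v t (conj Hv1 Hv2) ltac:(rewrite Rabs_right; lra)).
  have Ou := Hcube (proj1 Hu).
  have Hc : vcomb lam (fun c => x c + (w c + - s * e c)) (fun c => x c + (v c + t * e c)) = (fun c => x c + u c).
    apply: functional_extensionality => c; rewrite /vcomb /vadd /vscal /u.
    have Hz : (1 - lam) * (- s) + lam * t = 0 by rewrite /lam; field; lra.
    transitivity (x c + ((1 - lam) * w c + lam * v c) + e c * ((1 - lam) * (- s) + lam * t)); first ring.
    rewrite Hz; ring.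
  have := HG Oq Op (conj (Rlt_le _ _ (proj1 Hl)) (Rlt_le _ _ (proj2 Hl))); rewrite Hc => /(_ Ou) Hconv.
  have Hd : dot xi u = (1 - lam) * dot xi w + lam * dot xi v by rewrite /u dot_lin2.
  have H1 : 0 <= (1 - lam) * A w (- s) + lam * A v t by rewrite /A; lra.
  have -> : t * A w (- s) + s * A v t = (s + t) * ((1 - lam) * A w (- s) + lam * A v t)
    by rewrite /lam; field; lra.
  apply: Rmult_le_pos => //; lra.
pose S := fun u => exists w s, cubek k w /\ 0 < s <= rho /\ u = - A w (- s) / s.
have HSb : forall u, S u -> u <= A (fun _ => 0) rho / rho.
  move=> u [w [s [Hw [Hs ->]]]]; have := Hkey _ _ _ _ Hv0 Hw Hs (conj Hrho (Rle_refl _)).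
  move=> H; apply: le_div_r; first lra.
  have -> : - A w (- s) / s * rho = (- (rho * A w (- s))) / s by field; lra.
  apply: div_le_r; lra.
have [c Hc] := completeness S (ex_intro _ _ HSb)
   (ex_intro _ _ (ex_intro _ _ (ex_intro _ rho (conj Hv0 (conj (conj Hrho (Rle_refl _)) erefl))))).
have Hcup : forall u, S u -> u <= c by move=> u Hu; apply: (proj1 Hc).
have Hclow : forall v t, cubek k v -> 0 < t <= rho -> c <= A v t / t.
  move=> v t Hv Ht; apply: (proj2 Hc) => u [w [s [Hw [Hs ->]]]].
  have := Hkey _ _ _ _ Hv Hw Hs Ht => H.
  apply: le_div_r; first lra.
  have -> : - A w (- s) / s * t = (- (t * A w (- s))) / s by field; lra.
  apply: div_le_r; lra.
exists (fun c' => xi c' + c * e c'); split.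
  move=> c' Hc'; rewrite Hxi0 ?(ltnW Hc') // /e.
  case: (c' =P ek) => [E|_]; last by ring.
  by move: Hc'; rewrite E /= ltnn.
move=> w [Hw1 Hw2].
set t := w ek.
set v : vec m := fun c' => if c' == ek then 0 else w c'.
have Hv : cubek k v.
  split => c'; rewrite /v; case: (c' =P ek) => [_|Hne]; rewrite ?Rabs_R0 //; try lra.
  move=> Hkc; apply: Hw2; rewrite ltn_neqAle Hkc andbT.
  apply/eqP => E; apply: Hne; apply: val_inj => /=; by rewrite -E.
have Hwv : w = (fun c' => 1 * v c' + t * e c').
  apply: functional_extensionality => c'; rewrite /v /e /t.
  case: (c' =P ek) => [->|_]; ring.
have Hdot : dot (fun c' => xi c' + c * e c') w = dot xi v + c * t.
  rewrite {1}/dot (rsum_ext (g := fun j => xi j * w j + c * ((if j == ek then 1 else 0) * w j))); last first.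
    by move=> j /=; rewrite /e; ring.
  rewrite rsum_add rsum_scal rsum_delta -/(dot xi w) Hwv dot_lin2.
  have -> : dot xi e = xi ek.
    rewrite /dot (rsum_ext (g := fun j => (if j == ek then 1 else 0) * xi j)) ?rsum_delta //.
    by move=> j /=; rewrite /e; ring.
  rewrite Hxi0 /= ?leqnn // /t /v /e !eqxx; ring.
rewrite Hdot.
have Hw' : (fun c0 => x c0 + w c0) = (fun c0 => x c0 + (v c0 + t * e c0)).
  by apply: functional_extensionality => c0; rewrite {1}Hwv; ring.
rewrite Hw'.
have Hta := abs_le_inv (Hw1 ek); rewrite -/t in Hta.
case: (Rtotal_order t 0) => [Hneg|[Hz|Hpos]].
- have Hs : 0 < - t <= rho by lra.
  have HS : S (- A v (- - t) / - t) by exists v, (- t).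
  have := Hcup _ HS; rewrite Ropp_involutive => H.
  have : - A v t <= c * - t.
    have -> : - A v t = (- A v t / - t) * - t by field; lra.
    apply: Rmult_le_compat_r; lra.
  rewrite /A; lra.
- have := Hxi v Hv.
  have -> : (fun c0 => x c0 + (v c0 + t * e c0)) = (fun c0 => x c0 + v c0).
    by apply: functional_extensionality => c0; rewrite Hz; ring.
  rewrite Hz; lra.
- have := Hclow v t Hv (conj Hpos (proj2 Hta)) => H.
  have : c * t <= A v t.
    have -> : A v t = (A v t / t) * t by field; lra.
    apply: Rmult_le_compat_r; lra.
  rewrite /A; lra.
Qed.

Lemma subgrad_exists : exists xi, subgradient O G x xi.
Proof.
have [xi [_ Hxi]] := subgrad_ind (leqnn m).
exists xi => y Oy.
set N := rsum (fun c => Rabs (y c - x c)) + 1.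
have HN : 0 < N.
  rewrite /N; have : 0 <= rsum (fun c => Rabs (y c - x c)) by apply: rsum_ge0 => c; apply: Rabs_pos.
  lra.
set s := Rmin 1 (rho / N).
have Hs0 : 0 < s by apply: Rmin_pos; [lra| apply: Rdiv_lt_0_compat].
have Hs1 : s <= 1 := Rmin_l _ _.
have Hs2 : s <= rho / N := Rmin_r _ _.
set u : vec m := fun c => s * (y c - x c).
have Hu : cubek m u.
  split => c; last by move=> Hc; have := ltn_ord c; rewrite ltnNge Hc.
  rewrite /u Rabs_mult Rabs_right; last lra.
  have Hyc : Rabs (y c - x c) <= N.
    rewrite /N; have := rsum_term_le (f := fun c => Rabs (y c - x c)) c (fun j => Rabs_pos _); lra.
  apply: Rle_trans (Rmult_le_compat_l _ _ _ (Rlt_le _ _ Hs0) Hyc) _.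
  apply: Rle_trans (Rmult_le_compat_r _ _ _ (Rlt_le _ _ HN) Hs2) _.
  right; field; lra.
have Ox : O x.
  have := Hcube (v := fun _ => 0) (fun c => ltac:(rewrite Rabs_R0; lra)).
  by have -> : (fun c => x c + 0) = x by apply: functional_extensionality => c; ring.
have Hc : vcomb s x y = (fun c => x c + u c).
  by apply: functional_extensionality => c; rewrite /vcomb /vadd /vscal /u; ring.
have := HG Ox Oy (conj (Rlt_le _ _ Hs0) Hs1); rewrite Hc => /(_ (Hcube (proj1 Hu))) Hconv.
have := Hxi u Hu.
have -> : dot xi u = s * dot xi (vsub y x).
  by rewrite /dot -rsum_scal; apply: rsum_ext => c; rewrite /u /vsub; ring.
move=> H.
have : s * (G x + dot xi (vsub y x)) <= s * G y by nra.
move=> H2; apply: Rle_ge; apply: (Rmult_le_reg_l s) => //.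
Qed.
End Subgrad.

Lemma subgrad_exists_open m (O : vec m -> Prop) (G : vec m -> R) x :
  is_open O -> convex_fun_on O G -> O x -> exists xi, subgradient O G x xi.
Proof.
move=> HO HG Ox; have [r [Hr Hball]] := HO x Ox.
have Hm : 0 < INR m + 1 by have := pos_INR m; lra.
apply: (@subgrad_exists m O G x (r / (INR m + 1))) => //.
  exact: Rdiv_lt_0_compat.
move=> v Hv; apply: Hball.
have -> : vsub (fun c => x c + v c) x = v by apply: functional_extensionality => c; rewrite /vsub; ring.
apply: Rle_lt_trans (vnorm_le_sp Hv) _.
have -> : INR m * (r / (INR m + 1)) = r - r / (INR m + 1) by field; lra.
have : 0 < r / (INR m + 1) by apply: Rdiv_lt_0_compat.
lra.
Qed.


Lemma le_eps a b c : 0 <= c -> (forall eps, 0 < eps -> a <= b + eps * c) -> a <= b.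
Proof.
move=> Hc H; apply: Rnot_lt_le => Hab.
have Hp : 0 < (a - b) / (2 * (c + 1)) by apply: Rdiv_lt_0_compat; lra.
have := H _ Hp.
have : (a - b) / (2 * (c + 1)) * c < a - b.
  have -> : (a - b) / (2 * (c + 1)) * c = (a - b) * (c / (2 * (c + 1))) by field; lra.
  have : c / (2 * (c + 1)) < 1.
    have -> : c / (2 * (c + 1)) = 1 - (c + 2) / (2 * (c + 1)) by field; lra.
    have : 0 < (c + 2) / (2 * (c + 1)) by apply: Rdiv_lt_0_compat; lra.
    lra.
  have : 0 <= c / (2 * (c + 1)) by apply: Rle_mult_inv_pos; lra.
  nra.
lra.
Qed.

Lemma dot_vsub0 m (g x : vec m) : dot g (vsub x x) = 0.
Proof. rewrite /dot (rsum_ext (g := fun _ => 0)) ?rsum0 // => j; rewrite /vsub; ring. Qed.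

Lemma dot_sub1 m (a b d : vec m) : dot (vsub a b) d = dot a d - dot b d.
Proof. rewrite /dot -rsum_sub; apply: rsum_ext => j; rewrite /vsub; ring. Qed.

Lemma vnorm_eq0 m (v : vec m) : vnorm v = 0 -> v = (fun _ => 0).
Proof. move=> H; apply: functional_extensionality => j; exact: vnorm0_coord. Qed.

Lemma sc_grad m (X O : vec m -> Prop) (h : vec m -> R) (g : vec m -> vec m) tau x z :
  is_convex_set X -> (forall w, X w -> O w) -> X x -> X z ->
  strongly_convex_on X h tau -> has_gradient_on O h g ->
  dot (g x) (vsub z x) + tau / 2 * vnorm (vsub z x) ^ 2 <= h z - h x.
Proof.
move=> HXc HXO Xx Xz [Htau Hsc] Hgr.
set D := vnorm (vsub z x).
have HD0 : 0 <= D by apply: vnorm_ge0.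
case: (Req_dec D 0) => HD.
  have Hzx := vnorm_eq0 HD.
  have Ezx : z = x.
    apply: functional_extensionality => j.
    have := f_equal (fun f => f j) Hzx; rewrite /vsub /= => H; lra.
  rewrite HD {1 2}Ezx dot_vsub0; simpl; lra.
have HDp : 0 < D by lra.
apply: (le_eps (c := D + tau / 2 * D ^ 2)).
  have : 0 <= tau / 2 * D ^ 2 by apply: Rmult_le_pos; [lra| apply: pow2_ge_0].
  lra.
move=> eps Heps.
have [delta [Hdel Hg]] := Hgr x (HXO _ Xx) eps Heps.
set t := Rmin (1/2) (Rmin eps (delta / (2 * D))).
have Ht0 : 0 < t by apply: Rmin_pos; [lra| apply: Rmin_pos => //; apply: Rdiv_lt_0_compat; lra].
have Ht1 : t <= 1/2 := Rmin_l _ _.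
have Hte : t <= eps by apply: Rle_trans (Rmin_r _ _) (Rmin_l _ _).
have Htd : t <= delta / (2 * D) by apply: Rle_trans (Rmin_r _ _) (Rmin_r _ _).
have Hzt : vsub (vcomb t x z) x = vscal t (vsub z x).
  by apply: functional_extensionality => j; rewrite /vsub /vcomb /vadd /vscal; ring.
have Xzt : X (vcomb t x z) by apply: HXc => //; lra.
have Hn : vnorm (vsub (vcomb t x z) x) = t * D by rewrite Hzt vnorm_scal Rabs_right //; lra.
have Hlt : vnorm (vsub (vcomb t x z) x) < delta.
  rewrite Hn; have : t * D <= delta / 2.
    have -> : delta / 2 = delta / (2 * D) * D by field; lra.
    apply: Rmult_le_compat_r; lra.
  lra.
have := Hg _ (HXO _ Xzt) Hlt; rewrite Hn Hzt.
have -> : dot (g x) (vscal t (vsub z x)) = t * dot (g x) (vsub z x).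
  by rewrite /dot -rsum_scal; apply: rsum_ext => j; rewrite /vscal; ring.
move/abs_le_inv => [H1 _].
have := Hsc x z t Xx Xz ltac:(split; lra).
rewrite vsub_sym -/D => H2.
set q := dot (g x) (vsub z x).
have H3 : t * (q + tau / 2 * D ^ 2) <= t * (h z - h x + eps * (D + tau / 2 * D ^ 2)).
  have Hd2 : 0 <= D ^ 2 by apply: pow2_ge_0.
  have : tau / 2 * t * t * D ^ 2 <= tau / 2 * t * eps * D ^ 2.
    apply: Rmult_le_compat_r => //; apply: Rmult_le_compat_l; [|lra].
    apply: Rmult_le_pos; lra.
  move: H1 H2; rewrite -/q. nra.
apply: (Rmult_le_reg_l t) => //.
Qed.

Lemma xt_bound m (X O : vec m -> Prop) (h : vec m -> R) (g : vec m -> vec m) (G : vec m -> R)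
   tau (x0 xt y gf0 xi : vec m) (I LG : R) :
  is_convex_set X -> (forall w, X w -> O w) -> X x0 -> X xt ->
  strongly_convex_on X h tau -> has_gradient_on O h g -> g x0 = gf0 -> 0 <= I ->
  h xt + dot (vsub (vscal I y) gf0) (vsub xt x0) + G xt <=
  h x0 + dot (vsub (vscal I y) gf0) (vsub x0 x0) + G x0 ->
  subgradient O G x0 xi -> vnorm xi <= LG ->
  vnorm (vsub xt x0) <= 2 * INR m * (I * vnorm y + LG) / tau.
Proof.
move=> HXc HXO X0 Xt Hsc Hgr Hg0 HI Hmin Hsub HLG.
have Htau := proj1 Hsc.
have H1 := sc_grad HXc HXO X0 Xt Hsc Hgr; rewrite Hg0 in H1.
have H2 := Hsub xt (HXO _ Xt).
rewrite dot_vsub0 dot_sub1 in Hmin.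
set d := vnorm (vsub xt x0) in H1 *.
have Hd0 : 0 <= d by apply: vnorm_ge0.
have B1 := dot_bound (vscal I y) (vsub xt x0).
have B2 := dot_bound xi (vsub xt x0).
have HIa : Rabs I = I by apply: Rabs_right; lra.
rewrite vnorm_scal HIa in B1.
move/abs_le_inv: B1 => [B1 _]; move/abs_le_inv: B2 => [B2 _].
rewrite -/d in B1 B2.
have Hm := pos_INR m.
have Hny := vnorm_ge0 y.
have Hxi0 := vnorm_ge0 xi.
have Hkey : tau / 2 * d ^ 2 <= INR m * (I * vnorm y + LG) * d.
  have : INR m * (vnorm xi * d) <= INR m * (LG * d).
    apply: Rmult_le_compat_l => //; apply: Rmult_le_compat_r => //.
  have H2' : G x0 + dot xi (vsub xt x0) <= G xt by apply: Rge_le.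
  simpl; nra.
case: (Req_dec d 0) => Hd.
  rewrite Hd; apply: Rle_mult_inv_pos => //.
  have : 0 <= I * vnorm y by nra.
  have : 0 <= LG by lra.
  nra.
apply: le_div_r => //.
have Hdp : 0 < d by lra.
apply: (Rmult_le_reg_l (d / 2)); first lra.
simpl in Hkey. nra.
Qed.


Lemma pow_le1 x n : 0 <= x <= 1 -> x ^ n <= 1.
Proof. move=> Hx; elim: n => [|n IH] /=; first lra.
have := pow_le x n (proj1 Hx); nra. Qed.

Lemma pow_anti x m n : 0 <= x <= 1 -> (m <= n)%N -> x ^ n <= x ^ m.
Proof.
move=> Hx Hmn; rewrite -(subnKC Hmn) pow_add.
have := pow_le1 (n - m) Hx; have := pow_le x m (proj1 Hx); nra.
Qed.

Lemma crossing T (Rl : T -> T -> Prop) (Pp : T -> Prop) u v :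
  clos_trans _ Rl u v -> Pp u -> ~ Pp v -> exists p q, Rl p q /\ Pp p /\ ~ Pp q.
Proof.
elim => [x y H|x y z _ IH1 _ IH2] Hx Hz; first by exists x, y.
case: (classic (Pp y)) => Hy; [exact: IH2 | exact: IH1].
Qed.

Section Push.
Variables (n B : nat) (kappa : R) (E : nat -> 'I_n -> 'I_n -> Prop) (a : nat -> 'I_n -> 'I_n -> R).
Hypothesis Ha : admissible_weights E a kappa.
Hypothesis HE : B_strongly_connected E B.
Hypothesis Hk : 0 < kappa.

Fixpoint P (k s : nat) : 'I_n -> 'I_n -> R :=
  match s with
  | 0 => fun i j => if i == j then 1 else 0
  | S s' => fun i j => rsum (fun l => a (k + s') i l * P k s' l j)
  end.

Lemma a_ge0 k i j : 0 <= a k i j. Proof. exact: (proj1 (Ha k)). Qed.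

Lemma P_ge0 k s i j : 0 <= P k s i j.
Proof.
elim: s i j => [|s IH] i j /=; first by case: (i == j); lra.
apply: rsum_ge0 => l; apply: Rmult_le_pos; [exact: a_ge0| exact: IH].
Qed.

Lemma kappa_le1 (i0 : 'I_n) : kappa <= 1.
Proof.
case: (Ha 0%N) => _ [_ [_ [Hd Hs]]].
have := Hs i0; have := Hd i0.
move=> H1 H2; have := rsum_term_le (f := fun i => a 0%N i i0) i0 (fun i => a_ge0 0%N i i0).
lra.
Qed.

Definition reach k s (j i : 'I_n) := kappa ^ s <= P k s i j.

Lemma reach0 k j : reach k 0 j j.
Proof. by rewrite /reach /= eqxx; lra. Qed.

Lemma reach_edge k s j l i : reach k s j l -> (l = i \/ E (k + s) l i) -> reach k s.+1 j i.
Proof.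
rewrite /reach => Hr He /=.
have Hal : kappa <= a (k + s) i l.
  case: He => [<-|He]; first exact: (proj1 (proj2 (proj2 (proj2 (Ha _))))).
  exact: (proj1 (proj2 (proj2 (Ha _)))) He.
apply: Rle_trans (rsum_term_le (f := fun l => a (k + s) i l * P k s l j) l _).
  apply: Rmult_le_compat => //; [lra| apply: pow_le; lra].
move=> l'; apply: Rmult_le_pos; [exact: a_ge0| exact: P_ge0].
Qed.

Lemma reach_mono k s s' j i : (s <= s')%N -> reach k s j i -> reach k s' j i.
Proof.
move=> H; rewrite -(subnKC H); elim: (s' - s)%N => [|d IH]; first by rewrite addn0.
by move=> Hr; rewrite addnS; apply: (reach_edge (l := i)) => //; [exact: IH| left].
Qed.

Lemma phi_P (phi : nat -> 'I_n -> R) :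
  (forall k i, phi (S k) i = rsum (fun j => a k i j * phi k j)) ->
  forall k s i, phi (k + s)%N i = rsum (fun j => P k s i j * phi k j).
Proof.
move=> Hphi k s; elim: s => [|s IH] i.
  rewrite addn0 /= -(rsum_delta (phi k) i); apply: rsum_ext => j; by rewrite eq_sym.
rewrite addnS Hphi /=.
rewrite (rsum_ext (g := fun l => rsum (fun j => a (k + s)%N i l * P k s l j * phi k j))); last first.
  by move=> l; rewrite IH -rsum_scal; apply: rsum_ext => j; ring.
rewrite rsum_exch; apply: rsum_ext => j.
rewrite /rsum; apply: (big_rec2 (fun u v => u = v * phi k j)); first ring.
by move=> l u v _ ->; ring.
Qed.

Lemma window k s j : (exists i, ~ reach k s j i) -> exists i, ~ reach k s j i /\ reach k (s + B) j i.
Proof.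
move=> [v Hv].
have Hj : reach k s j j by apply: (reach_mono (leq0n s)); exact: reach0.
have Hjv : j <> v by move=> E'; apply: Hv; rewrite -E'.
have := HE (k + s)%N Hjv => Hct.
have [p [q [[t [Ht1 [Ht2 Hpq]]] [Hp Hq]]]] := crossing Hct Hj Hv.
exists q; split => //.
have Hs : (s <= t - k)%N by lia.
have Hp' := reach_mono Hs Hp.
have Ht : (k + (t - k))%N = t by lia.
have := reach_edge Hp' (or_intror (eq_ind _ (fun t' => E t' p q) Hpq _ (esym Ht))).
apply: reach_mono; lia.
Qed.

Definition reachb k s j i : bool := if Rle_dec (kappa ^ s) (P k s i j) then true else false.

Lemma reachbP k s j i : reflect (reach k s j i) (reachb k s j i).
Proof. rewrite /reachb /reach; case: (Rle_dec _ _) => H; constructor => //. Qed.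

Lemma card_reach k j r : (minn r.+1 n <= #|[set i | reachb k (r * B) j i]|)%N.
Proof.
elim: r => [|r IH].
  apply: leq_trans (geq_minl _ _) _; rewrite card_gt0; apply/set0Pn; exists j.
  rewrite inE mul0n; apply/reachbP; exact: reach0.
set S := [set i | reachb k (r * B) j i] in IH *.
set S' := [set i | reachb k (r.+1 * B) j i].
have HSS : S \subset S'.
  apply/subsetP => i; rewrite !inE => /reachbP H; apply/reachbP; apply: reach_mono H; lia.
case: (classic (exists i, ~ reach k (r * B) j i)) => Hex.
  have [i [Hi1 Hi2]] := window Hex.
  have Hpr : S \proper S'.
    apply/properP; split => //; exists i; rewrite !inE; [apply/reachbP; by rewrite mulSnr | by apply/reachbP].
  have := proper_card Hpr; move: IH; rewrite /minn; case: ifP; case: ifP; lia.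
have HS : S = setT.
  apply/setP => i; rewrite !inE; apply/reachbP; apply: NNPP => H; apply: Hex; by exists i.
have HS' : S' = setT by apply/eqP; rewrite eqEcard subsetT -HS; apply: subset_leq_card.
rewrite HS' cardsT card_ord; exact: geq_minr.
Qed.

Lemma full_reach k j i : (0 < n)%N -> reach k ((n - 1) * B) j i.
Proof.
move=> Hn; apply: NNPP => H.
have Hc := card_reach k j (n - 1).
have : [set i0 | reachb k ((n - 1) * B) j i0] \subset [set~ i].
  apply/subsetP => i0; rewrite !inE => /reachbP Hr; apply/eqP => E'; apply: H; by rewrite -E'.
move/subset_leq_card; rewrite cardsC1 card_ord.
move: Hc; have -> : (n - 1).+1 = n by lia.
rewrite minnn; lia.
Qed.
End Push.


Lemma phi_facts n B kappa (E : nat -> 'I_n -> 'I_n -> Prop) a (phi : nat -> 'I_n -> R) :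
  (2 <= n)%N -> 0 < kappa -> admissible_weights E a kappa -> B_strongly_connected E B ->
  (forall i, phi 0%N i = 1) -> (forall k i, phi (S k) i = rsum (fun j => a k i j * phi k j)) ->
  (forall k, rsum (phi k) = INR n) /\ (forall k i, 0 <= phi k i) /\
  (forall k i, kappa ^ ((n - 1) * B) <= phi k i) /\ kappa <= 1.
Proof.
move=> Hn Hk Ha HE H0 Hphi.
have i0 : 'I_n by exists 0%N; lia.
have Hk1 := kappa_le1 Ha i0.
have Hpos : forall k i, 0 <= phi k i.
  elim=> [|k IH] i; first by rewrite H0; lra.
  rewrite Hphi; apply: rsum_ge0 => j; apply: Rmult_le_pos => //; exact: (proj1 (Ha k)).
have Hsum : forall k, rsum (phi k) = INR n.
  elim=> [|k IH].
    by rewrite (rsum_ext (g := fun _ => 1)) // rsum_const; ring.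
  rewrite (rsum_ext (f := phi k.+1) (Hphi k)) rsum_exch -IH; apply: rsum_ext => j.
  rewrite (rsum_ext (g := fun i => phi k j * a k i j)); last by move=> i; ring.
  rewrite rsum_scal (proj2 (proj2 (proj2 (proj2 (Ha k))))); ring.
have Hpow : forall k i, kappa ^ k <= phi k i.
  elim=> [|k IH] i; first by rewrite H0 /=; lra.
  rewrite Hphi /=.
  apply: Rle_trans (rsum_term_le (f := fun j => a k i j * phi k j) i _).
    apply: Rmult_le_compat; [lra| apply: pow_le; lra| exact: (proj1 (proj2 (proj2 (proj2 (Ha k)))))| exact: IH].
  move=> j; apply: Rmult_le_pos => //; exact: (proj1 (Ha k)).
split => //; split => //; split => // k i.
set T := ((n - 1) * B)%N.
have HT0 : 0 <= kappa ^ T by apply: pow_le; lra.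
case: (leqP k T) => HkT.
  apply: Rle_trans (Hpow k i); apply: pow_anti => //; lra.
have -> : k = ((k - T) + T)%N by lia.
rewrite (phi_P Hphi).
apply: Rle_trans (_ : rsum (fun j => kappa ^ T * phi (k - T)%N j) <= _).
  rewrite rsum_scal Hsum.
  have : 1 <= INR n by apply: (le_INR 1); apply/leP; lia.
  nra.
apply: rsum_le => j; apply: Rmult_le_compat_r => //.
exact: (full_reach Ha HE Hk (k - T) j i ltac:(lia)).
Qed.


Fixpoint ssum (f : nat -> R) (n : nat) : R :=
  match n with 0 => 0 | S n' => ssum f n' + f n' end.

Lemma ssum_ge0 f n : (forall t, 0 <= f t) -> 0 <= ssum f n.
Proof. move=> H; elim: n => [|n IH] /=; [lra| have := H n; lra]. Qed.

Lemma ssum_le f g n : (forall t, (t < n)%N -> f t <= g t) -> ssum f n <= ssum g n.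
Proof.
elim: n => [|n IH] H /=; first lra.
have := H n (ltnSn n); have := IH (fun t Ht => H t (ltnW Ht)); lra.
Qed.

Lemma ssum_scal c f n : ssum (fun t => c * f t) n = c * ssum f n.
Proof. elim: n => [|n IH] /=; [ring| rewrite IH; ring]. Qed.

Lemma ssum_add f g n : ssum (fun t => f t + g t) n = ssum f n + ssum g n.
Proof. elim: n => [|n IH] /=; [ring| rewrite IH; ring]. Qed.

Lemma ssum_const c n : ssum (fun _ => c) n = INR n * c.
Proof. elim: n => [|n IH] /=; [ring| rewrite IH; change (INR n * c + c = INR (S n) * c); rewrite S_INR; ring]. Qed.

Lemma ssum_mono f n n' : (forall t, 0 <= f t) -> (n <= n')%N -> ssum f n <= ssum f n'.
Proof.
move=> H Hn; rewrite -(subnKC Hn); elim: (n' - n)%N => [|d IH]; first by rewrite addn0; lra.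
rewrite addnS /=; have := H (n + d)%N; lra.
Qed.

Lemma exists_max n (z : 'I_n -> R) (i0 : 'I_n) : exists jM, forall j, z j <= z jM.
Proof.
have : forall s : seq 'I_n, exists jM, forall j, j \in s -> z j <= z jM.
  elim => [|x s [jM HjM]]; first by exists i0.
  case: (Rle_dec (z x) (z jM)) => H.
    exists jM => j; rewrite in_cons => /orP [/eqP ->|Hj] //; exact: HjM.
  exists x => j; rewrite in_cons => /orP [/eqP ->|Hj]; first lra.
  have := HjM j Hj; lra.
move=> /(_ (enum 'I_n)) [jM H]; exists jM => j; apply: H; by rewrite mem_enum.
Qed.

Definition spr n (z : 'I_n -> R) := bmax (fun i => bmax (fun j => z i - z j)).

Lemma spr_ge n (z : 'I_n -> R) i j : z i - z j <= spr z.
Proof. apply: Rle_trans (bmax_ge _ j) (bmax_ge (fun i => bmax (fun j => z i - z j)) i). Qed.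

Lemma spr_ge0 n (z : 'I_n -> R) : 0 <= spr z.
Proof. exact: bmax_ge0. Qed.

Lemma spr_le n (z : 'I_n -> R) c : 0 <= c -> (forall i j, z i - z j <= c) -> spr z <= c.
Proof. move=> H0 H; apply: bmax_le => // i; apply: bmax_le => // j; exact: H. Qed.

Lemma wavg_dev n (q z : 'I_n -> R) i :
  (forall j, 0 <= q j) -> rsum q = 1 -> Rabs (rsum (fun j => q j * z j) - z i) <= spr z.
Proof.
move=> Hq Hs.
have -> : rsum (fun j => q j * z j) - z i = rsum (fun j => q j * (z j - z i)).
  rewrite (rsum_ext (f := fun j => q j * (z j - z i)) (g := fun j => q j * z j - z i * q j)); last by move=> j; ring.
  by rewrite rsum_sub rsum_scal Hs; ring.
apply: abs_le_intro; split.
  have -> : - spr z = rsum (fun j => q j * (- spr z)) by rewrite (rsum_ext (g := fun j => - spr z * q j)) ?rsum_scal ?Hs; [ring| move=> j; ring].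
  apply: rsum_le => j; apply: Rmult_le_compat_l => //; have := spr_ge z i j; lra.
have -> : spr z = rsum (fun j => q j * spr z) by rewrite (rsum_ext (g := fun j => spr z * q j)) ?rsum_scal ?Hs; [ring| move=> j; ring].
apply: rsum_le => j; apply: Rmult_le_compat_l => //; exact: spr_ge.
Qed.

Lemma wavg_abs n (q r : 'I_n -> R) R0 :
  (forall j, 0 <= q j) -> rsum q = 1 -> (forall j, Rabs (r j) <= R0) -> Rabs (rsum (fun j => q j * r j)) <= R0.
Proof.
move=> Hq Hs Hr; apply: Rle_trans (rsum_abs _) _.
have -> : R0 = rsum (fun j => q j * R0) by rewrite (rsum_ext (g := fun j => R0 * q j)) ?rsum_scal ?Hs; [ring| move=> j; ring].
apply: rsum_le => j; rewrite Rabs_mult Rabs_right; last by apply: Rle_ge.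
apply: Rmult_le_compat_l => //.
Qed.

Lemma contract n (q : 'I_n -> 'I_n -> R) (z z' : 'I_n -> R) dl R0 :
  (forall i j, 0 <= q i j) -> (forall i, rsum (q i) = 1) -> (forall i j, dl <= q i j) ->
  (forall i, Rabs (z' i - rsum (fun j => q i j * z j)) <= R0) ->
  forall i i', z' i - z' i' <= (1 - dl) * spr z + 2 * R0.
Proof.
move=> Hq Hs Hd Hz i i'.
have [jM HM] := exists_max z i.
have [jm Hm] := exists_max (fun j => - z j) i.
have HLo : forall j, (z jm) <= z j by move=> j; have := Hm j; lra.
have Hsp : (z jM) - (z jm) <= spr z := spr_ge z jM jm.
have Hdl1 : dl <= 1.
  have := Hd i jm; have := rsum_term_le (f := q i) jm (Hq i); rewrite Hs; lra.
have E1 : rsum (fun j => q i j * z j) <= (z jM) - dl * ((z jM) - (z jm)).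
  have -> : rsum (fun j => q i j * z j) = (z jM) - rsum (fun j => q i j * ((z jM) - z j)).
    rewrite (rsum_ext (f := fun j => q i j * ((z jM) - z j)) (g := fun j => (z jM) * q i j - q i j * z j)); last by move=> j; ring.
    by rewrite rsum_sub rsum_scal Hs; ring.
  have : q i jm * ((z jM) - (z jm)) <= rsum (fun j => q i j * ((z jM) - z j)).
    apply: (rsum_term_le (f := fun j => q i j * ((z jM) - z j))) => j.
    apply: Rmult_le_pos; [exact: Hq| have := HM j; lra].
  have := Hd i jm; have : 0 <= (z jM) - (z jm) by have := HM jm; lra.
  nra.
have E2 : (z jm) <= rsum (fun j => q i' j * z j).
  have -> : (z jm) = rsum (fun j => q i' j * (z jm)) by rewrite (rsum_ext (g := fun j => (z jm) * q i' j)) ?rsum_scal ?Hs; [ring| move=> j; ring].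
  apply: rsum_le => j; apply: Rmult_le_compat_l => //.
have := abs_le_inv (Hz i); have := abs_le_inv (Hz i').
have : (1 - dl) * ((z jM) - (z jm)) <= (1 - dl) * spr z by apply: Rmult_le_compat_l; lra.
lra.
Qed.

Lemma rsum_scalr n (f : 'I_n -> R) c : rsum f * c = rsum (fun i => f i * c).
Proof. rewrite Rmult_comm -rsum_scal; apply: rsum_ext => i; ring. Qed.

Section Cons.
Variables (n : nat) (W : nat -> 'I_n -> 'I_n -> R).
Hypothesis HW0 : forall k i j, 0 <= W k i j.
Hypothesis HW1 : forall k i, rsum (W k i) = 1.

Fixpoint Q (k s : nat) : 'I_n -> 'I_n -> R :=
  match s with
  | 0 => fun i j => if i == j then 1 else 0
  | S s' => fun i j => rsum (fun l => W (k + s') i l * Q k s' l j)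
  end.

Lemma Q_ge0 k s i j : 0 <= Q k s i j.
Proof.
elim: s i j => [|s IH] i j /=; first by case: (i == j); lra.
apply: rsum_ge0 => l; apply: Rmult_le_pos; [exact: HW0| exact: IH].
Qed.

Lemma Q_row k s i : rsum (Q k s i) = 1.
Proof.
elim: s i => [|s IH] i /=.
  rewrite -[RHS](rsum_delta (fun _ => 1) i); apply: rsum_ext => j /=; rewrite eq_sym; ring.
rewrite rsum_exch -(HW1 (k + s) i); apply: rsum_ext => l.
by rewrite rsum_scal IH; ring.
Qed.

Lemma cons_repr (z d : nat -> 'I_n -> R) (D : nat -> R) :
  (forall k i, z (S k) i = rsum (fun j => W k i j * z k j) + d k i) ->
  (forall k i, Rabs (d k i) <= D k) ->
  forall k s i, Rabs (z (k + s)%N i - rsum (fun j => Q k s i j * z k j)) <= ssum (fun t => D (k + t)%N) s.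
Proof.
move=> Hz Hd k s; elim: s => [|s IH] i /=.
  rewrite addn0 (rsum_ext (g := fun j => (if j == i then 1 else 0) * z k j)) ?rsum_delta.
    by rewrite Rminus_diag_eq // Rabs_R0; lra.
  by move=> j; rewrite eq_sym.
rewrite addnS Hz.
have -> : rsum (fun j => rsum (fun l => W (k + s)%N i l * Q k s l j) * z k j) =
          rsum (fun l => W (k + s)%N i l * rsum (fun j => Q k s l j * z k j)).
  rewrite (rsum_ext (g := fun j => rsum (fun l => W (k + s)%N i l * Q k s l j * z k j))); last first.
    by move=> j; rewrite rsum_scalr.
  rewrite rsum_exch; apply: rsum_ext => l; rewrite -rsum_scal; apply: rsum_ext => j; ring.
set r := fun l => z (k + s)%N l - rsum (fun j => Q k s l j * z k j).
have -> : rsum (fun j => W (k + s)%N i j * z (k + s)%N j) + d (k + s)%N i -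
     rsum (fun l => W (k + s)%N i l * rsum (fun j => Q k s l j * z k j)) =
     rsum (fun l => W (k + s)%N i l * r l) + d (k + s)%N i.
  rewrite /r (rsum_ext (f := fun l => W (k + s)%N i l * (z (k + s)%N l - rsum (fun j => Q k s l j * z k j))) (g := fun l => W (k + s)%N i l * z (k + s)%N l - W (k + s)%N i l * rsum (fun j => Q k s l j * z k j))); last by move=> l; ring.
  rewrite rsum_sub; ring.
apply: Rle_trans (Rabs_triang _ _) _.
apply: Rplus_le_compat; last exact: Hd.
apply: wavg_abs => //; exact: IH.
Qed.
End Cons.


Lemma fin_max (f : nat -> R) N : exists M, forall k, (k < N)%N -> f k <= M.
Proof.
elim: N => [|N [M HM]]; first by exists 0.
exists (Rmax M (f N)) => k; rewrite ltnS leq_eqVlt => /orP [/eqP ->|Hk]; first exact: Rmax_r.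
apply: Rle_trans (HM k Hk) (Rmax_l _ _).
Qed.

Section Final.
Variables (SX SY g D : nat -> R) (A K2 dl : R) (T : nat).
Hypotheses (HT : (0 < T)%N) (Hdl : 0 < dl <= 1) (HA : 0 <= A) (HK2 : 0 <= K2).
Hypotheses (HSX : forall k, 0 <= SX k) (HSY : forall k, 0 <= SY k) (HD : forall k, 0 <= D k)
  (Hg : forall k, 0 < g k <= 1) (Hg0 : forall eps, 0 < eps -> exists N, forall k, (N <= k)%N -> g k <= eps).
Hypothesis HDb : forall k, D k <= K2 * (SX k + SY k + 1).
Hypothesis R1 : forall k, SX (S k) <= SX k + 2 * (g k * D k).
Hypothesis R2 : forall k, SY (S k) <= SY k + 2 * (A * (SX k + g k * D k)).
Hypothesis W1 : forall k, SX (k + T)%N <= (1 - dl) * SX k + 2 * ssum (fun t => g (k + t)%N * D (k + t)%N) T.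
Hypothesis W2 : forall k, SY (k + T)%N <= (1 - dl) * SY k +
   2 * ssum (fun t => A * (SX (k + t)%N + g (k + t)%N * D (k + t)%N)) T.

Let Z k := SX k + SY k + 1.
Let C1 := 1 + 2 * K2 + 2 * A * (1 + K2).

Lemma Z_step k : Z (S k) <= C1 * Z k.
Proof.
rewrite /Z /C1.
have := R1 k; have := R2 k; have := HDb k; have := Hg k; have := HSX k; have := HSY k; have := HD k.
move=> h1 h2 h3 h4 h5 h6 h7.
have E1 : g k * D k <= K2 * (SX k + SY k + 1) by nra.
have E2 : A * (g k * D k) <= A * (K2 * (SX k + SY k + 1)) by apply: Rmult_le_compat_l.
have E3 : A * SX k <= A * (SX k + SY k + 1) by apply: Rmult_le_compat_l; lra.
nra.
Qed.

Lemma C1_ge1 : 1 <= C1.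
Proof. rewrite /C1; have : 0 <= A * (1 + K2) by nra. lra. Qed.

Let CT := C1 ^ T.

Lemma Z_win k t : (t <= T)%N -> Z (k + t)%N <= CT * Z k.
Proof.
move=> Ht; apply: Rle_trans (_ : C1 ^ t * Z k <= _); last first.
  apply: Rmult_le_compat_r; first by rewrite /Z; have := HSX k; have := HSY k; lra.
  apply: Rle_pow => //; [exact: C1_ge1| exact/leP].
elim: t Ht => [|t IH] Ht; first by rewrite addn0 /=; lra.
rewrite addnS /=; apply: Rle_trans (Z_step _) _.
have := IH (ltnW Ht); have := C1_ge1; nra.
Qed.

Let Gam k := ssum (fun t => g (k + t)%N) T.

Lemma gD_sum k : ssum (fun t => g (k + t)%N * D (k + t)%N) T <= K2 * CT * Z k * Gam k.
Proof.
rewrite /Gam -ssum_scal; apply: ssum_le => t Ht.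
have := Z_win k (ltnW Ht); have := HDb (k + t)%N; have := Hg (k + t)%N.
rewrite -/(Z (k + t)%N) => h1 h2 h3.
have : D (k + t)%N <= K2 * (CT * Z k) by apply: Rle_trans h2 _; apply: Rmult_le_compat_l.
move=> h4; have := HD (k + t)%N; nra.
Qed.

Lemma SX_win k t : (t <= T)%N -> SX (k + t)%N <= SX k + 2 * (K2 * CT * Z k * Gam k).
Proof.
move=> Ht; apply: Rle_trans (_ : SX (k + t)%N <= SX k + 2 * ssum (fun t => g (k + t)%N * D (k + t)%N) t) _.
  elim: t Ht => [|t IH] Ht; first by rewrite addn0 /=; lra.
  rewrite addnS /=; have := R1 (k + t)%N; have := IH (ltnW Ht); lra.
have := gD_sum k; have := ssum_mono (f := fun t => g (k + t)%N * D (k + t)%N) (fun t => Rmult_le_pos _ _ (Rlt_le _ _ (proj1 (Hg _))) (HD _)) Ht.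
lra.
Qed.

Let beta := 2 * K2 * CT + 2 * A * (2 * INR T + 1) * K2 * CT.
Let alpha := 2 * A * INR T.

Lemma Gam_ge0 k : 0 <= Gam k.
Proof. apply: ssum_ge0 => t; have := Hg (k + t)%N; lra. Qed.

Lemma Z_ge1 k : 1 <= Z k.
Proof. rewrite /Z; have := HSX k; have := HSY k; lra. Qed.

Lemma CT_ge1 : 1 <= CT.
Proof. rewrite /CT; have := Rle_pow C1 0 T C1_ge1 (le_0_n T); simpl; lra. Qed.

Lemma W1' k : SX (k + T)%N <= (1 - dl) * SX k + beta * Gam k * Z k.
Proof.
have := W1 k; have := gD_sum k; have := Gam_ge0 k; have := Z_ge1 k; have := CT_ge1.
rewrite /beta => h1 h2 h3 h4 h5.
have : 0 <= 2 * A * (2 * INR T + 1) * K2 * CT * Gam k * Z k.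
  have := pos_INR T; move=> hT; have hC : 0 <= C1 ^ T by rewrite -/CT; lra.
  repeat apply: Rmult_le_pos; lra.
nra.
Qed.

Lemma W2' k : SY (k + T)%N <= (1 - dl) * SY k + alpha * SX k + beta * Gam k * Z k.
Proof.
have H := W2 k.
have Hs : ssum (fun t => A * (SX (k + t)%N + g (k + t)%N * D (k + t)%N)) T <=
   A * (INR T * (SX k + 2 * (K2 * CT * Z k * Gam k)) + K2 * CT * Z k * Gam k).
  rewrite ssum_scal ssum_add; apply: Rmult_le_compat_l => //.
  apply: Rplus_le_compat; last exact: gD_sum.
  rewrite -ssum_const; apply: ssum_le => t Ht; exact: SX_win (ltnW Ht).
have := Gam_ge0 k; have := Z_ge1 k; have := CT_ge1; have := pos_INR T.
rewrite /alpha /beta => h1 h2 h3 h4.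
have : 0 <= 2 * K2 * CT * Gam k * Z k by repeat apply: Rmult_le_pos; lra.
move=> h5.
have : 2 * (A * (INR T * (SX k + 2 * (K2 * CT * Z k * Gam k)) + K2 * CT * Z k * Gam k)) =
  2 * A * INR T * SX k + 2 * A * (2 * INR T + 1) * K2 * CT * Gam k * Z k by ring.
nra.
Qed.

Lemma final_bounded : exists M, forall k, SX k <= M /\ SY k <= M.
Proof.
have Hal : 0 <= alpha by rewrite /alpha; have := pos_INR T; nra.
have Hbe : 0 <= beta.
  rewrite /beta; have := CT_ge1; have := pos_INR T => h1 h2.
  have : 0 <= 2 * K2 * CT by nra.
  have : 0 <= 2 * A * (2 * INR T + 1) * K2 * CT by repeat apply: Rmult_le_pos; lra.
  lra.
set eps := dl / (2 * alpha + 2).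
have He : 0 < eps by apply: Rdiv_lt_0_compat; lra.
have He1 : eps <= 1 / 2.
  apply: div_le_r; lra.
have Hea : eps * alpha <= dl / 2.
  rewrite /eps; have -> : dl / (2 * alpha + 2) * alpha = dl * (alpha / (2 * alpha + 2)) by field; lra.
  have : alpha / (2 * alpha + 2) <= 1 / 2 by apply: div_le_r; lra.
  nra.
set eta := dl * eps / (8 * beta + 1).
have Het : 0 < eta by apply: Rdiv_lt_0_compat; nra.
have Het2 : 2 * beta * eta <= dl / 4 * eps.
  rewrite /eta; have -> : 2 * beta * (dl * eps / (8 * beta + 1)) = dl * eps * (2 * beta / (8 * beta + 1)) by field; lra.
  have : 2 * beta / (8 * beta + 1) <= 1 / 4 by apply: div_le_r; lra.
  have : 0 <= dl * eps by nra.
  nra.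
set V := fun k => SX k + eps * SY k.
have HV0 : forall k, 0 <= V k by move=> k; rewrite /V; have := HSX k; have := HSY k; nra.
have HZV : forall k, Z k <= V k / eps + 1.
  move=> k; rewrite /Z /V.
  have -> : (SX k + eps * SY k) / eps = SX k / eps + SY k by field; lra.
  have : SX k <= SX k / eps.
    apply: le_div_r => //; have := HSX k; nra.
  lra.
have [N HN] := Hg0 (Rdiv_lt_0_compat _ _ Het (lt_0_INR T ltac:(lia))).
have HGam : forall k, (N <= k)%N -> Gam k <= eta.
  move=> k Hk; rewrite /Gam.
  apply: Rle_trans (_ : ssum (fun _ => eta / INR T) T <= _).
    apply: ssum_le => t _; apply: HN; lia.
  rewrite ssum_const; right; field; apply: not_0_INR; lia.
set c0 := 2 * beta * eta.
have Hstep : forall k, (N <= k)%N -> V (k + T)%N <= (1 - dl / 4) * V k + c0.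
  move=> k Hk; rewrite /V.
  have h1 := W1' k; have h2 := W2' k; have h3 := HGam k Hk; have h4 := HZV k; have h5 := Gam_ge0 k.
  have h6 := HSX k; have h7 := HSY k; have h8 := Z_ge1 k.
  have e1 : eps * SY (k + T)%N <= eps * ((1 - dl) * SY k + alpha * SX k + beta * Gam k * Z k).
    by apply: Rmult_le_compat_l; lra.
  have e2 : beta * Gam k * Z k <= beta * eta * (V k / eps + 1).
    rewrite Rmult_assoc (Rmult_assoc beta eta); apply: Rmult_le_compat_l => //.
    apply: Rmult_le_compat => //; lra.
  have e3 : (1 + eps) * (beta * eta * (V k / eps + 1)) <= dl / 4 * V k + c0.
    rewrite /c0.
    have -> : (1 + eps) * (beta * eta * (V k / eps + 1)) = (beta * eta / eps) * (1 + eps) * V k + (1 + eps) * beta * eta by field; lra.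
    have : beta * eta / eps * (1 + eps) <= dl / 4.
      have : beta * eta / eps <= dl / 8.
        apply: div_le_r => //; lra.
      have : 0 <= beta * eta / eps by apply: Rle_mult_inv_pos; nra.
      nra.
    have := HV0 k; rewrite /V => h9 h10.
    have : 0 <= beta * eta by nra.
    nra.
  have e4 : 0 <= beta * Gam k * Z k by repeat apply: Rmult_le_pos; lra.
  rewrite /V in e3.
  have e5 : eps * alpha * SX k <= dl / 2 * SX k by apply: Rmult_le_compat_r.
  have e6 : (1 + eps) * (beta * Gam k * Z k) <= (1 + eps) * (beta * eta * (V k / eps + 1)).
    apply: Rmult_le_compat_l => //; lra.
  have e7 : 0 <= dl * (eps * SY k) by apply: Rmult_le_pos; [lra| nra].
  rewrite /V in e6.
  lra.
have [M0 HM0] := fin_max V (N + T).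
set M := Rmax M0 (4 * c0 / dl).
have HMstep : (1 - dl / 4) * M + c0 <= M.
  have : 4 * c0 / dl <= M := Rmax_r _ _.
  have -> : 4 * c0 / dl = c0 / (dl / 4) by field; lra.
  move=> H; have : c0 <= M * (dl / 4).
    have -> : c0 = c0 / (dl / 4) * (dl / 4) by field; lra.
    apply: Rmult_le_compat_r; lra.
  lra.
have HVM : forall k, V k <= M.
  elim/ltn_ind => k IH.
  case: (ltnP k (N + T)) => Hk; first exact: Rle_trans (HM0 k Hk) (Rmax_l _ _).
  have -> : k = ((k - T) + T)%N by lia.
  apply: Rle_trans (Hstep (k - T)%N ltac:(lia)) _.
  have := IH (k - T)%N ltac:(lia); have := HV0 (k - T)%N.
  move=> h1 h2; apply: Rle_trans HMstep; apply: Rplus_le_compat_r; apply: Rmult_le_compat_l => //; lra.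
exists (M / eps) => k; split.
  have := HVM k; rewrite /V; have := HSY k => h1 h2.
  have : SX k <= M by nra.
  move=> h3; apply: le_div_r => //; have := HSX k; nra.
apply: le_div_r => //; have := HVM k; rewrite /V; have := HSX k; nra.
Qed.
End Final.


Lemma rsum_recr n (f : 'I_n.+1 -> R) :
  rsum f = rsum (fun j : 'I_n => f (widen_ord (leqnSn n) j)) + f ord_max.
Proof. by rewrite /rsum big_ord_recr. Qed.

Lemma rsum_zero_each n (f : 'I_n -> R) : (forall j, 0 <= f j) -> rsum f = 0 -> forall j, f j = 0.
Proof. move=> H0 Hs j; have := rsum_term_le j H0; have := H0 j; lra. Qed.

Lemma convex_comb m (X : vec m -> Prop) n (w : 'I_n -> R) (p : 'I_n -> vec m) :
  is_convex_set X -> (forall j, 0 <= w j) -> rsum w = 1 -> (forall j, X (p j)) ->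
  X (fun c => rsum (fun j => w j * p j c)).
Proof.
move=> HX; elim: n w p => [|n IH] w p Hw Hs Hp.
  by move: Hs; rewrite /rsum big_ord0 => H; exfalso; lra.
rewrite rsum_recr in Hs.
set s := rsum (fun j : 'I_n => w (widen_ord (leqnSn n) j)) in Hs.
have Hs0 : 0 <= s by apply: rsum_ge0.
case: (Req_dec s 0) => Hsz.
  have Hz := rsum_zero_each (fun j => Hw (widen_ord (leqnSn n) j)) Hsz.
  have -> : (fun c => rsum (fun j => w j * p j c)) = p ord_max.
    apply: functional_extensionality => c; rewrite rsum_recr.
    rewrite (rsum_ext (g := fun _ => 0)) ?rsum0; last by move=> j; rewrite Hz; ring.
    have -> : w ord_max = 1 by lra.
    ring.
  exact: Hp.
set q : vec m := fun c => rsum (fun j : 'I_n => (w (widen_ord (leqnSn n) j) / s) * p (widen_ord (leqnSn n) j) c).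
have Hq : X q.
  apply: IH => [j||j]; last exact: Hp.
  - apply: Rle_mult_inv_pos => //; lra.
  - rewrite (rsum_ext (g := fun j => / s * w (widen_ord (leqnSn n) j))); last by move=> j; rewrite /Rdiv; ring.
    rewrite rsum_scal -/s; field; lra.
have -> : (fun c => rsum (fun j => w j * p j c)) = vcomb (w ord_max) q (p ord_max).
  apply: functional_extensionality => c; rewrite rsum_recr /vcomb /vadd /vscal /q.
  have -> : 1 - w ord_max = s by lra.
  rewrite -rsum_scal; congr (_ + _); apply: rsum_ext => j; field; lra.
apply: HX => //; have := Hw ord_max; lra.
Qed.


Section Main.
Variables (m nI B : nat) (kappa : R)
  (X O : vec m -> Prop)
  (f : 'I_nI -> vec m -> R) (gf : 'I_nI -> vec m -> vec m) (L : 'I_nI -> R)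
  (G : vec m -> R)
  (E : nat -> 'I_nI -> 'I_nI -> Prop) (a : nat -> 'I_nI -> 'I_nI -> R)
  (ft : 'I_nI -> vec m -> vec m -> R) (gft : 'I_nI -> vec m -> vec m -> vec m)
  (tau Lt : 'I_nI -> R)
  (gamma : nat -> R) (LF LG : R)
  (x xh xt y : nat -> 'I_nI -> vec m) (phi : nat -> 'I_nI -> R).
Hypotheses (HI : (2 <= nI)%N) (HB : (0 < B)%N)
  (HXne : exists z, X z) (HXcl : is_closed X) (HXcv : is_convex_set X)
  (HOop : is_open O) (HXO : forall z, X z -> O z)
  (Hf : forall i, C1_on O (f i) (gf i) /\ lipschitz_on X (gf i) (L i))
  (HG : convex_fun_on O G)
  (Hkappa : 0 < kappa)
  (HE : B_strongly_connected E B)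
  (Ha : admissible_weights E a kappa)
  (Hft1 : forall i w, X w -> strongly_convex_on X (fun z => ft i z w) (tau i))
  (Hft2 : forall i w, X w -> C1_on O (fun z => ft i z w) (fun z => gft i z w))
  (Hft3 : forall i w, X w -> gft i w w = gf i w)
  (HA1 : forall z, X z -> vnorm (vsum (fun i => gf i z)) <= LF)
  (HA2 : forall z xi, X z -> subgradient O G z xi -> vnorm xi <= LG)
  (HA3a : forall k, 0 < gamma k <= 1)
  (HA3c : exists l, Un_cv (fun n => sum_f_R0 (fun k => (gamma k) ^ 2) n) l)
  (Hx0 : forall i, X (x 0%nat i))
  (Hphi0 : forall i, phi 0%nat i = 1)
  (Hy0 : forall i, y 0%nat i = gf i (x 0%nat i))
  (Hxt : forall k i, X (xt k i) /\
     forall z, X z -> sonata_obj ft gf G i (x k i) (y k i) (xt k i)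
                      <= sonata_obj ft gf G i (x k i) (y k i) z)
  (Hxh : forall k i, xh k i = vadd (x k i) (vscal (gamma k) (vsub (xt k i) (x k i))))
  (Hphi : forall k i, phi (S k) i = rsum (fun j => a k i j * phi k j))
  (Hx : forall k i, x (S k) i =
     vscal (/ phi (S k) i) (vsum (fun j => vscal (a k i j * phi k j) (xh k j))))
  (Hy : forall k i, y (S k) i =
     vadd (vscal (/ phi (S k) i) (vsum (fun j => vscal (a k i j * phi k j) (y k j))))
          (vscal (/ phi (S k) i) (vsub (gf i (x (S k) i)) (gf i (x k i))))).

Let T := ((nI - 1) * B)%N.
Let i0 : 'I_nI := Ordinal (ltnW HI).

Lemma phiF : (forall k, rsum (phi k) = INR nI) /\ (forall k i, 0 <= phi k i) /\
  (forall k i, kappa ^ T <= phi k i) /\ kappa <= 1.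
Proof. exact: (phi_facts HI Hkappa Ha HE Hphi0 Hphi). Qed.

Let plb := kappa ^ T.
Lemma plb_pos : 0 < plb. Proof. exact: pow_lt. Qed.
Lemma phi_lb k i : plb <= phi k i. Proof. exact: (proj1 (proj2 (proj2 phiF))). Qed.
Lemma phi_pos k i : 0 < phi k i. Proof. have := phi_lb k i; have := plb_pos; lra. Qed.
Lemma phi_sum k : rsum (phi k) = INR nI. Proof. exact: (proj1 phiF). Qed.
Lemma phi_ub k i : phi k i <= INR nI.
Proof. rewrite -(phi_sum k); apply: rsum_term_le => j; have := phi_pos k j; lra. Qed.
Lemma nI_pos : 1 <= INR nI.
Proof. apply: (le_INR 1); apply/leP; lia. Qed.

Lemma partA : 0 < kappa ^ (2 * (nI - 1) * B) /\
   forall k i, kappa ^ (2 * (nI - 1) * B) <= phi k i <= INR nI - kappa ^ (2 * (nI - 1) * B).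
Proof.
have Hk1 := proj2 (proj2 (proj2 phiF)).
have E2 : (2 * (nI - 1) * B)%N = (T + T)%N by rewrite /T; lia.
rewrite E2 pow_add -/plb.
have Hp := plb_pos.
have Hp1 : plb <= 1 by apply: pow_le1; lra.
split; first by apply: Rmult_lt_0_compat.
move=> k i; split.
  apply: Rle_trans (phi_lb k i); nra.
set j1 : 'I_nI := if i == i0 then Ordinal HI else i0.
have Hj1 : j1 != i.
  rewrite /j1; case: (i =P i0) => [->|Hne]; last by apply/eqP => E'; apply: Hne; rewrite E'.
  by apply/eqP => /(f_equal val) /=.
have := rsum_D1 (phi k) i; rewrite phi_sum => Hs.
have : phi k j1 <= rsum (fun j => if j != i then phi k j else 0).
  have := rsum_term_le (f := fun j => if j != i then phi k j else 0) j1.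
  rewrite Hj1; apply => j; case: (j != i); [exact: Rlt_le (phi_pos _ _)| lra].
have := phi_lb k j1; nra.
Qed.

Let Wm k i j := a k i j * phi k j / phi (S k) i.

Lemma HW0 k i j : 0 <= Wm k i j.
Proof.
rewrite /Wm; apply: Rle_mult_inv_pos; last exact: phi_pos.
apply: Rmult_le_pos; [exact: (proj1 (Ha k))| exact: Rlt_le (phi_pos _ _)].
Qed.

Lemma HW1 k i : rsum (Wm k i) = 1.
Proof.
rewrite /Wm (rsum_ext (g := fun j => / phi (S k) i * (a k i j * phi k j))); last by move=> j; rewrite /Rdiv; ring.
rewrite rsum_scal -Hphi; field; have := phi_pos (S k) i; lra.
Qed.

Lemma Q_P k s i j : Q Wm k s i j = P a k s i j * phi k j / phi (k + s)%N i.
Proof.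
elim: s i j => [|s IH] i j /=.
  rewrite addn0; case: (i =P j) => [->|_]; last by rewrite /Rdiv; ring.
  field; have := phi_pos k j; lra.
rewrite addnS.
rewrite (rsum_ext (g := fun l => phi k j / phi (k + s).+1 i * (a (k + s)%N i l * P a k s l j))); last first.
  move=> l; rewrite IH /Wm.
  field; split; [have := phi_pos (k + s).+1 i| have := phi_pos (k + s)%N l]; lra.
rewrite rsum_scal; rewrite /Rdiv; ring.
Qed.

Let dl := plb * plb / INR nI.

Lemma dl_pos : 0 < dl /\ dl <= 1.
Proof.
have Hp := plb_pos; have HnI := nI_pos.
have Hp1 : plb <= 1 by apply: pow_le1; have := proj2 (proj2 (proj2 phiF)); lra.
split; first by apply: Rdiv_lt_0_compat; nra.
apply: div_le_r; nra.
Qed.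

Lemma Q_lb k i j : dl <= Q Wm k T i j.
Proof.
rewrite Q_P /dl.
have Hr : plb <= P a k T i j by apply: (full_reach Ha HE Hkappa k j i); lia.
have Hp := plb_pos.
have := phi_lb k j; have := phi_ub (k + T)%N i; have := phi_pos (k + T)%N i; have := nI_pos => h1 h2 h3 h4.
apply: Rle_trans (_ : plb * plb / phi (k + T)%N i <= _).
  apply: Rmult_le_compat_l; first nra.
  apply: Rinv_le_contravar => //.
apply: Rmult_le_compat_r; first by left; apply: Rinv_0_lt_compat.
apply: Rmult_le_compat => //; lra.
Qed.

Lemma x_eq k i : x (S k) i = (fun c => rsum (fun j => Wm k i j * xh k j c)).
Proof.
apply: functional_extensionality => c; rewrite Hx /vscal /vsum -rsum_scal.
apply: rsum_ext => j; rewrite /Wm /Rdiv; ring.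
Qed.

Lemma x_X k i : X (x k i).
Proof.
elim: k i => [|k IH] i; first exact: Hx0.
rewrite x_eq; apply: convex_comb => //; [exact: HW0| exact: HW1| move=> j].
have -> : xh k j = vcomb (gamma k) (x k j) (xt k j).
  by rewrite Hxh; apply: functional_extensionality => c; rewrite /vcomb /vadd /vscal /vsub; ring.
apply: HXcv; [exact: IH| exact: (proj1 (Hxt k j))| have := HA3a k; lra].
Qed.

Lemma x_dyn k i c : x (S k) i c = rsum (fun j => Wm k i j * x k j c) +
   rsum (fun j => Wm k i j * (gamma k * (xt k j c - x k j c))).
Proof.
rewrite x_eq -rsum_add; apply: rsum_ext => j; rewrite Hxh /vadd /vscal /vsub; ring.
Qed.

Lemma y_dyn k i c : y (S k) i c = rsum (fun j => Wm k i j * y k j c) +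
   (gf i (x (S k) i) c - gf i (x k i) c) / phi (S k) i.
Proof.
rewrite Hy /vadd /vscal /vsum /vsub -rsum_scal; congr (_ + _); last by rewrite /Rdiv; ring.
apply: rsum_ext => j; rewrite /Wm /Rdiv; ring.
Qed.

Lemma y_inv k c : rsum (fun l => phi k l * y k l c) = rsum (fun l => gf l (x k l) c).
Proof.
elim: k => [|k IH].
  by apply: rsum_ext => l; rewrite Hphi0 Hy0; ring.
rewrite (rsum_ext (g := fun l => rsum (fun j => a k l j * phi k j * y k j c) +
      (gf l (x (S k) l) c - gf l (x k l) c))); last first.
  move=> l; rewrite y_dyn /Wm Rmult_plus_distr_l; congr (_ + _).
    rewrite -rsum_scal; apply: rsum_ext => j; field; have := phi_pos (S k) l; lra.
  field; have := phi_pos (S k) l; lra.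
rewrite rsum_add rsum_exch rsum_sub -IH.
have -> : rsum (fun j => rsum (fun i => a k i j * phi k j * y k j c)) = rsum (fun j => phi k j * y k j c).
  apply: rsum_ext => j.
  rewrite (rsum_ext (g := fun i => (phi k j * y k j c) * a k i j)); last by move=> i; ring.
  rewrite rsum_scal (proj2 (proj2 (proj2 (proj2 (Ha k))))); ring.
ring.
Qed.

Let SX k := bmax (fun c => spr (fun j => x k j c)).
Let SY k := bmax (fun c => spr (fun j => y k j c)).
Let Dx k := bmax (fun j => vnorm (vsub (xt k j) (x k j))).
Let Lmax := rsum (fun i => Rabs (L i)).

Lemma SX_ge k c i j : x k i c - x k j c <= SX k.
Proof. apply: Rle_trans (spr_ge (fun j => x k j c) i j) (bmax_ge (fun c => spr (fun j => x k j c)) c). Qed.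
Lemma SY_ge k c i j : y k i c - y k j c <= SY k.
Proof. apply: Rle_trans (spr_ge (fun j => y k j c) i j) (bmax_ge (fun c => spr (fun j => y k j c)) c). Qed.
Lemma SX_ge0 k : 0 <= SX k. Proof. exact: bmax_ge0. Qed.
Lemma SY_ge0 k : 0 <= SY k. Proof. exact: bmax_ge0. Qed.
Lemma Dx_ge0 k : 0 <= Dx k. Proof. exact: bmax_ge0. Qed.
Lemma Lmax_ge i : Rabs (L i) <= Lmax.
Proof. apply: (rsum_term_le (f := fun i => Rabs (L i))) => j; exact: Rabs_pos. Qed.

Lemma sprX_le k c : spr (fun j => x k j c) <= SX k.
Proof. exact: (bmax_ge (fun c => spr (fun j => x k j c)) c). Qed.
Lemma sprY_le k c : spr (fun j => y k j c) <= SY k.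
Proof. exact: (bmax_ge (fun c => spr (fun j => y k j c)) c). Qed.

Lemma dx_bound k i c : Rabs (rsum (fun j => Wm k i j * (gamma k * (xt k j c - x k j c)))) <= gamma k * Dx k.
Proof.
apply: wavg_abs; [exact: HW0| exact: HW1| move=> j].
have Hg := HA3a k.
rewrite Rabs_mult Rabs_right; last lra.
apply: Rmult_le_compat_l; first lra.
apply: Rle_trans (_ : Rabs (vsub (xt k j) (x k j) c) <= _); first by right.
apply: Rle_trans (coord_le _ c) (bmax_ge (fun j => vnorm (vsub (xt k j) (x k j))) j).
Qed.

Lemma xstep k i c : Rabs (x (S k) i c - x k i c) <= SX k + gamma k * Dx k.
Proof.
rewrite x_dyn.
have := wavg_dev (fun j => x k j c) i (HW0 k i) (HW1 k i).
have := dx_bound k i c; have := sprX_le k c.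
move=> h1 h2 h3; apply: abs_le_intro; have := abs_le_inv h2; have := abs_le_inv h3; lra.
Qed.

Let Ay := Lmax * INR m / plb.

Lemma dy_bound k i c : Rabs ((gf i (x (S k) i) c - gf i (x k i) c) / phi (S k) i) <= Ay * (SX k + gamma k * Dx k).
Proof.
have Hp := phi_lb (S k) i; have Hpp := plb_pos.
rewrite /Rdiv Rabs_mult Rabs_Rinv; last by have := phi_pos (S k) i; lra.
rewrite (Rabs_right (phi _ _)); last by have := phi_pos (S k) i; lra.
have H1 : Rabs (gf i (x (S k) i) c - gf i (x k i) c) <= Lmax * (INR m * (SX k + gamma k * Dx k)).
  apply: Rle_trans (_ : Rabs (vsub (gf i (x (S k) i)) (gf i (x k i)) c) <= _); first by right.
  apply: Rle_trans (coord_le _ c) _.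
  apply: Rle_trans ((proj2 (Hf i)) _ _ (x_X (S k) i) (x_X k i)) _.
  have Hv : vnorm (vsub (x (S k) i) (x k i)) <= INR m * (SX k + gamma k * Dx k).
    apply: vnorm_le_sp => c'; exact: xstep.
  have Hl := Lmax_ge i; have Hl' := Rle_abs (L i).
  have := vnorm_ge0 (vsub (x (S k) i) (x k i)).
  have : 0 <= Lmax by apply: Rle_trans (Rabs_pos _) Hl.
  nra.
rewrite /Ay.
have Hm := pos_INR m.
have HL : 0 <= Lmax by apply: Rle_trans (Rabs_pos _) (Lmax_ge i).
have HS : 0 <= SX k + gamma k * Dx k by have := SX_ge0 k; have := Dx_ge0 k; have := HA3a k; nra.
apply: Rle_trans (_ : Lmax * (INR m * (SX k + gamma k * Dx k)) * / plb <= _).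
  apply: Rmult_le_compat => //; try apply: Rabs_pos.
    by left; apply: Rinv_0_lt_compat; have := phi_pos (S k) i; lra.
  by apply: Rinv_le_contravar.
right; field; lra.
Qed.

Lemma gen_win (z : nat -> 'I_nI -> vec m) (d : nat -> 'I_nI -> 'I_m -> R) (Dd : nat -> R) :
  (forall k i c, z (S k) i c = rsum (fun j => Wm k i j * z k j c) + d k i c) ->
  (forall k i c, Rabs (d k i c) <= Dd k) -> (forall k, 0 <= Dd k) ->
  (forall k, bmax (fun c => spr (fun j => z (S k) j c)) <= bmax (fun c => spr (fun j => z k j c)) + 2 * Dd k) /\
  (forall k, bmax (fun c => spr (fun j => z (k + T)%N j c)) <=
     (1 - dl) * bmax (fun c => spr (fun j => z k j c)) + 2 * ssum (fun t => Dd (k + t)%N) T).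
Proof.
move=> Hz Hd HD0.
have Hdl := dl_pos.
split => k.
  have H0 : 0 <= bmax (fun c => spr (fun j => z k j c)) + 2 * Dd k by have := bmax_ge0 (fun c => spr (fun j => z k j c)); have := HD0 k; lra.
  apply: bmax_le => // c; apply: spr_le => // i i'.
  have := @contract _ (Wm k) (fun j => z k j c) (fun j => z (S k) j c) 0 (Dd k) (HW0 k) (HW1 k) (HW0 k).
  have Hr : forall i1, Rabs (z (S k) i1 c - rsum (fun j => Wm k i1 j * z k j c)) <= Dd k.
    move=> i1; rewrite Hz; have -> : rsum (fun j => Wm k i1 j * z k j c) + d k i1 c - rsum (fun j => Wm k i1 j * z k j c) = d k i1 c by ring.
    exact: Hd.
  move=> /(_ Hr i i') H.
  have := bmax_ge (fun c => spr (fun j => z k j c)) c.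
  lra.
have HS0 : 0 <= ssum (fun t => Dd (k + t)%N) T by apply: ssum_ge0.
have H0 : 0 <= (1 - dl) * bmax (fun c => spr (fun j => z k j c)) + 2 * ssum (fun t => Dd (k + t)%N) T.
  have := bmax_ge0 (fun c => spr (fun j => z k j c)); nra.
apply: bmax_le => // c; apply: spr_le => // i i'.
have Hrep := @cons_repr _ Wm HW0 HW1 (fun k i => z k i c) (fun k i => d k i c) Dd (fun k i => Hz k i c) (fun k i => Hd k i c) k T.
have := @contract _ (Q Wm k T) (fun j => z k j c) (fun j => z (k + T)%N j c) dl _
   (Q_ge0 HW0 k T) (Q_row HW1 k T) (Q_lb k) Hrep i i'.
have := bmax_ge (fun c => spr (fun j => z k j c)) c.
move=> h1 h2; have : (1 - dl) * spr (fun j => z k j c) <= (1 - dl) * bmax (fun c => spr (fun j => z k j c)).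
  apply: Rmult_le_compat_l => //; lra.
lra.
Qed.

Lemma LF_ge0 : 0 <= LF.
Proof. have := HA1 (Hx0 i0); have := vnorm_ge0 (vsum (fun i => gf i (x 0%N i0))); lra. Qed.

Lemma LG_ge0 : 0 <= LG.
Proof.
have [xi Hxi] := subgrad_exists_open HOop HG (HXO (Hx0 i0)).
have := HA2 (Hx0 i0) Hxi; have := vnorm_ge0 xi; lra.
Qed.

Lemma Lmax_ge0 : 0 <= Lmax.
Proof. apply: rsum_ge0 => i; exact: Rabs_pos. Qed.

Lemma tau_pos j : 0 < tau j.
Proof. exact: (proj1 (Hft1 j (Hx0 i0))). Qed.

Lemma gsum_bound k c : Rabs (rsum (fun l => gf l (x k l) c)) <= LF + Lmax * (INR m * SX k).
Proof.
have -> : rsum (fun l => gf l (x k l) c) = rsum (fun l => gf l (x k i0) c) + rsum (fun l => gf l (x k l) c - gf l (x k i0) c).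
  rewrite -rsum_add; apply: rsum_ext => l; ring.
apply: Rle_trans (Rabs_triang _ _) _; apply: Rplus_le_compat.
  apply: Rle_trans (_ : Rabs (vsum (fun l => gf l (x k i0)) c) <= _); first by right.
  apply: Rle_trans (coord_le _ c) _; exact: HA1 (x_X k i0).
apply: Rle_trans (rsum_abs _) _.
rewrite /Lmax rsum_scalr; apply: rsum_le => l.
apply: Rle_trans (_ : Rabs (vsub (gf l (x k l)) (gf l (x k i0)) c) <= _); first by right.
apply: Rle_trans (coord_le _ c) _.
apply: Rle_trans ((proj2 (Hf l)) _ _ (x_X k l) (x_X k i0)) _.
have Hv : vnorm (vsub (x k l) (x k i0)) <= INR m * SX k.
  apply: vnorm_le_sp => c'; apply: abs_le_intro; rewrite /vsub; have := SX_ge k c' l i0; have := SX_ge k c' i0 l; lra.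
have := vnorm_ge0 (vsub (x k l) (x k i0)); have := Rle_abs (L l); have := Rabs_pos (L l); nra.
Qed.

Lemma ynorm_bound k j : vnorm (y k j) <= INR m * (SY k + (LF + Lmax * (INR m * SX k))).
Proof.
apply: vnorm_le_sp => c.
set q := fun l => phi k l / INR nI.
have Hq0 : forall l, 0 <= q l by move=> l; apply: Rle_mult_inv_pos; [exact: Rlt_le (phi_pos _ _)| have := nI_pos; lra].
have Hq1 : rsum q = 1.
  rewrite /q (rsum_ext (g := fun l => / INR nI * phi k l)); last by move=> l; rewrite /Rdiv; ring.
  rewrite rsum_scal phi_sum; field; have := nI_pos; lra.
have H1 := wavg_dev (fun l => y k l c) j Hq0 Hq1.
have H2 : rsum (fun l => q l * y k l c) = / INR nI * rsum (fun l => gf l (x k l) c).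
  rewrite -y_inv -rsum_scal; apply: rsum_ext => l; rewrite /q /Rdiv; ring.
have H3 := gsum_bound k c.
have H4 : Rabs (rsum (fun l => q l * y k l c)) <= LF + Lmax * (INR m * SX k).
  rewrite H2 Rabs_mult Rabs_Rinv; last by have := nI_pos; lra.
  rewrite Rabs_right; last by have := nI_pos; lra.
  have HnI := nI_pos.
  have Hn0 : 0 < / INR nI <= 1.
    split; first by apply: Rinv_0_lt_compat; lra.
    rewrite -Rinv_1; apply: Rinv_le_contravar; lra.
  have := Rabs_pos (rsum (fun l => gf l (x k l) c)); nra.
have H5 := sprY_le k c.
apply: abs_le_intro; have := abs_le_inv H1; have := abs_le_inv H4; lra.
Qed.

Let K2 := rsum (fun j => 2 * INR m * (INR nI * INR m * (1 + LF + Lmax * INR m) + LG) / tau j).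

Lemma K2_coef_ge0 j : 0 <= 2 * INR m * (INR nI * INR m * (1 + LF + Lmax * INR m) + LG) / tau j.
Proof.
apply: Rle_mult_inv_pos; last exact: tau_pos.
have := pos_INR m; have := pos_INR nI; have := LF_ge0; have := Lmax_ge0; have := LG_ge0 => h1 h2 h3 h4 h5.
have : 0 <= Lmax * INR m by nra.
move=> h6; have : 0 <= INR nI * INR m by nra.
move=> h7; have : 0 <= INR nI * INR m * (1 + LF + Lmax * INR m) by nra.
nra.
Qed.

Lemma K2_ge0 : 0 <= K2.
Proof. apply: rsum_ge0 => j; exact: K2_coef_ge0. Qed.

Lemma Dx_bound k : Dx k <= K2 * (SX k + SY k + 1).
Proof.
have HZ : 0 <= SX k + SY k + 1 by have := SX_ge0 k; have := SY_ge0 k; lra.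
apply: bmax_le => [|j]; first by apply: Rmult_le_pos => //; exact: K2_ge0.
have Xj := x_X k j.
have [xi Hxi] := subgrad_exists_open HOop HG (HXO Xj).
have Hxin := HA2 Xj Hxi.
have Hb := @xt_bound m X O (fun z => ft j z (x k j)) (fun z => gft j z (x k j)) G (tau j)
   (x k j) (xt k j) (y k j) (gf j (x k j)) xi (INR nI) LG HXcv HXO Xj (proj1 (Hxt k j))
   (Hft1 j Xj) (proj1 (Hft2 j Xj)) (Hft3 j Xj) (pos_INR nI) ((proj2 (Hxt k j)) _ Xj) Hxi Hxin.
apply: Rle_trans Hb _.
apply: Rle_trans (_ : 2 * INR m * (INR nI * INR m * (1 + LF + Lmax * INR m) + LG) / tau j * (SX k + SY k + 1) <= _); last first.
  apply: Rmult_le_compat_r => //; apply: (rsum_term_le (f := fun j => 2 * INR m * (INR nI * INR m * (1 + LF + Lmax * INR m) + LG) / tau j)) => j'.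
  exact: K2_coef_ge0.
have Ht := tau_pos j.
have -> : 2 * INR m * (INR nI * INR m * (1 + LF + Lmax * INR m) + LG) / tau j * (SX k + SY k + 1) =
  2 * INR m * ((INR nI * INR m * (1 + LF + Lmax * INR m) + LG) * (SX k + SY k + 1)) / tau j by field; lra.
apply: Rmult_le_compat_r; first by left; apply: Rinv_0_lt_compat.
apply: Rmult_le_compat_l; first by have := pos_INR m; lra.
have Hyn := ynorm_bound k j.
have h1 := pos_INR m; have h2 := pos_INR nI; have h3 := LF_ge0; have h4 := Lmax_ge0; have h5 := LG_ge0.
have h6 := SX_ge0 k; have h7 := SY_ge0 k.
have e1 : SY k + (LF + Lmax * (INR m * SX k)) <= (1 + LF + Lmax * INR m) * (SX k + SY k + 1).
  have : 0 <= Lmax * INR m by nra.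
  nra.
have e2 : INR nI * vnorm (y k j) <= INR nI * INR m * ((1 + LF + Lmax * INR m) * (SX k + SY k + 1)).
  rewrite Rmult_assoc; apply: Rmult_le_compat_l => //.
  apply: Rle_trans Hyn _; apply: Rmult_le_compat_l => //.
have e3 : LG <= LG * (SX k + SY k + 1) by nra.
nra.
Qed.

Lemma gamma_to0 : forall eps, 0 < eps -> exists N, forall k, (N <= k)%N -> gamma k <= eps.
Proof.
move=> eps He; have [l Hl] := HA3c.
have He2 : 0 < eps * eps / 2 by nra.
have [N HN] := Hl _ He2.
exists N.+1 => k Hk.
case: k Hk => [|p] Hk //.
have h1 := HN p ltac:(apply/leP; lia); have h2 := HN p.+1 ltac:(apply/leP; lia).
rewrite /R_dist in h1 h2.
have Hs : sum_f_R0 (fun k => gamma k ^ 2) p.+1 = sum_f_R0 (fun k => gamma k ^ 2) p + gamma p.+1 ^ 2 by [].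
rewrite Hs in h2.
have Hsq : gamma p.+1 ^ 2 < eps * eps.
  move: h1 h2; set s1 := sum_f_R0 _ p => h1 h2.
  have := Rabs_def2 _ _ h1; have := Rabs_def2 _ _ h2; lra.
have := HA3a p.+1; simpl in Hsq; nra.
Qed.

Lemma bounded_SXY : exists M, forall k, SX k <= M /\ SY k <= M.
Proof.
have HdxD : forall k i c, Rabs (rsum (fun j => Wm k i j * (gamma k * (xt k j c - x k j c)))) <= gamma k * Dx k by exact: dx_bound.
have HgD0 : forall k, 0 <= gamma k * Dx k by move=> k; have := HA3a k; have := Dx_ge0 k; nra.
have [GX1 GX2] := gen_win (z := x) (fun k i c => x_dyn k i c) HdxD HgD0.
have HAy : 0 <= Ay by apply: Rle_mult_inv_pos; [have := Lmax_ge0; have := pos_INR m; nra| exact: plb_pos].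
have HyD0 : forall k, 0 <= Ay * (SX k + gamma k * Dx k) by move=> k; have := SX_ge0 k; have := HgD0 k; nra.
have [GY1 GY2] := gen_win (z := y) (fun k i c => y_dyn k i c) (fun k i c => dy_bound k i c) HyD0.
have Hdl := dl_pos.
apply: (@final_bounded SX SY gamma Dx Ay K2 dl T) => //.
- rewrite /T; have := HB; have := HI; nia.
- exact: K2_ge0.
- exact: SX_ge0.
- exact: SY_ge0.
- exact: Dx_ge0.
- exact: gamma_to0.
- exact: Dx_bound.
Qed.

Lemma main_sec : let ybar := fun k => vscal (/ INR nI) (vsum (fun j => vscal (phi k j) (y k j))) in
  (0 < kappa ^ (2 * (nI - 1) * B) /\
   forall k i, kappa ^ (2 * (nI - 1) * B) <= phi k i <= INR nI - kappa ^ (2 * (nI - 1) * B)) /\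
  (forall i, exists M, forall k, vnorm (vsub (y k i) (ybar k)) <= M) /\
  (forall i, exists M, forall k, vnorm (vsub (x k i) (xt k i)) <= M).
Proof.
move=> ybar.
split; first exact: partA.
have [M HM] := bounded_SXY.
split => i.
  exists (INR m * M) => k; apply: vnorm_le_sp => c.
  set q := fun l => phi k l / INR nI.
  have Hq0 : forall l, 0 <= q l by move=> l; apply: Rle_mult_inv_pos; [exact: Rlt_le (phi_pos _ _)| have := nI_pos; lra].
  have Hq1 : rsum q = 1.
    rewrite /q (rsum_ext (g := fun l => / INR nI * phi k l)); last by move=> l; rewrite /Rdiv; ring.
    rewrite rsum_scal phi_sum; field; have := nI_pos; lra.
  have H1 := wavg_dev (fun l => y k l c) i Hq0 Hq1.
  have -> : vsub (y k i) (ybar k) c = - (rsum (fun l => q l * y k l c) - y k i c).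
    rewrite /vsub /ybar /vscal /vsum -rsum_scal /q.
    have : rsum (fun l => phi k l / INR nI * y k l c) = rsum (fun i0 => / INR nI * (phi k i0 * y k i0 c)).
      by apply: rsum_ext => l; rewrite /Rdiv; ring.
    move=> ->; ring.
  rewrite Rabs_Ropp; apply: Rle_trans H1 _; apply: Rle_trans (sprY_le k c) _; exact: (proj2 (HM k)).
exists (K2 * (M + M + 1)) => k.
rewrite vsub_sym.
apply: Rle_trans (bmax_ge (fun j => vnorm (vsub (xt k j) (x k j))) i) _.
apply: Rle_trans (Dx_bound k) _; apply: Rmult_le_compat_l; first exact: K2_ge0.
have := HM k; lra.
Qed.
End Main.

Unset Implicit Arguments.
Set Strict Implicit.

Theorem mainTheorem17
  (m nI B : nat) (kappa : R)
  (X O : vec m -> Prop)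
  (f : 'I_nI -> vec m -> R) (gf : 'I_nI -> vec m -> vec m) (L : 'I_nI -> R)
  (G : vec m -> R)
  (E : nat -> 'I_nI -> 'I_nI -> Prop) (a : nat -> 'I_nI -> 'I_nI -> R)
  (ft : 'I_nI -> vec m -> vec m -> R) (gft : 'I_nI -> vec m -> vec m -> vec m)
  (tau Lt : 'I_nI -> R)
  (gamma : nat -> R) (LF LG : R)
  (x xh xt y : nat -> 'I_nI -> vec m) (phi : nat -> 'I_nI -> R)
  (* setting *)
  (HI : (2 <= nI)%N) (HB : (0 < B)%N)
  (HXne : exists z, X z) (HXcl : is_closed X) (HXcv : is_convex_set X)
  (HOop : is_open O) (HXO : forall z, X z -> O z)
  (Hf : forall i, C1_on O (f i) (gf i) /\ lipschitz_on X (gf i) (L i))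
  (HG : convex_fun_on O G)
  (HV : exists c, forall z, X z -> c <= rsum (fun i => f i z) + G z)
  (Hkappa : 0 < kappa)
  (HE : B_strongly_connected E B)
  (Ha : admissible_weights E a kappa)
  (* Assumption III.14 on the surrogates: ft i z w = f~_i(z | w) *)
  (Hft1 : forall i w, X w -> strongly_convex_on X (fun z => ft i z w) (tau i))
  (Hft2 : forall i w, X w -> C1_on O (fun z => ft i z w) (fun z => gft i z w))
  (Hft3 : forall i w, X w -> gft i w w = gf i w)
  (Hft4 : forall i z, X z -> lipschitz_on X (fun w => gft i z w) (Lt i))
  (* (A1), (A2), (A3) *)
  (HA1 : forall z, X z -> vnorm (vsum (fun i => gf i z)) <= LF)
  (HA2 : forall z xi, X z -> subgradient O G z xi -> vnorm xi <= LG)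
  (HA3a : forall k, 0 < gamma k <= 1)
  (HA3b : cv_infty (fun n => sum_f_R0 gamma n))
  (HA3c : exists l, Un_cv (fun n => sum_f_R0 (fun k => (gamma k) ^ 2) n) l)
  (* SONATA *)
  (Hx0 : forall i, X (x 0%nat i))
  (Hphi0 : forall i, phi 0%nat i = 1)
  (Hy0 : forall i, y 0%nat i = gf i (x 0%nat i))
  (Hxt : forall k i, X (xt k i) /\
     forall z, X z -> sonata_obj ft gf G i (x k i) (y k i) (xt k i)
                      <= sonata_obj ft gf G i (x k i) (y k i) z)
  (Hxh : forall k i, xh k i = vadd (x k i) (vscal (gamma k) (vsub (xt k i) (x k i))))
  (Hphi : forall k i, phi (S k) i = rsum (fun j => a k i j * phi k j))
  (Hx : forall k i, x (S k) i =
     vscal (/ phi (S k) i) (vsum (fun j => vscal (a k i j * phi k j) (xh k j))))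
  (Hy : forall k i, y (S k) i =
     vadd (vscal (/ phi (S k) i) (vsum (fun j => vscal (a k i j * phi k j) (y k j))))
          (vscal (/ phi (S k) i) (vsub (gf i (x (S k) i)) (gf i (x k i))))) :
  let ybar := fun k => vscal (/ INR nI) (vsum (fun j => vscal (phi k j) (y k j))) in
  (* (a) *)
  (0 < kappa ^ (2 * (nI - 1) * B) /\
   forall k i, kappa ^ (2 * (nI - 1) * B) <= phi k i <= INR nI - kappa ^ (2 * (nI - 1) * B)) /\
  (* (b) *)
  (forall i, exists M, forall k, vnorm (vsub (y k i) (ybar k)) <= M) /\
  (* (c) *)
  (forall i, exists M, forall k, vnorm (vsub (x k i) (xt k i)) <= M).
Proof.
exact: (main_sec HI HB HXcv HOop HXO Hf HG Hkappa HE Ha Hft1 Hft2 Hft3 HA1 HA2 HA3a HA3c Hx0 Hphi0 Hy0 Hxt Hxh Hphi Hx Hy).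
Qed.
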